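(* Let $\mathfrak a$ be a commutative $n$-ary superalgebra, invariant with respect to an even non-degenerate skew-symmetric form, which is irreducible and not simple. Let $\mathfrak i$ be a maximal non-trivial ideal and $\mathfrak h$ an isotropic $n$-ary subalgebra of $\mathfrak a$ such that $\mathfrak a=\mathfrak i\oplus\mathfrak h$. Then $\mathfrak a$ is isomorphic to a certain generalized double extension (of some commutative invariant $n$-ary superalgebra $\mathfrak g$ by $\mathfrak h$ via some $\psi_1,\dots,\psi_{n+1}$) with $\psi_n=\psi_{n+1}=0$; such a generalized double extension is called a double extension.
   Context: $\mathbb K=\mathbb R$ or $\mathbb C$; spaces are finite-dimensional $\mathbb Z_2$-graded, $\bar a$ is parity. The form $(\,,)$ is even and skew-symmetric in the super sense, $(a,b)=-(-1)^{\bar a\bar b}(b,a)$. An $n$-ary superalgebra is a space with an $n$-linear map $\{\,\}$; commutative: $\{\dots,a_i,a_{i+1},\dots\}=(-1)^{\bar a_i\bar a_{i+1}}\{\dots,a_{i+1},a_i,\dots\}$; invariant: $(a_0,\{a_1,\dots,a_n\})=(-1)^{\bar a_0\bar a_1}(a_1,\{a_0,a_2,\dots,a_n\})$. Subalgebra: subspace $\mathfrak b$ with $\{\mathfrak b,\dots,\mathfrak b\}\subset\mathfrak b$. Ideal: subspace $\mathfrak i$ with $\{\mathfrak a,\dots,\mathfrak a,\mathfrak i\}\subset\mathfrak i$. Simple: not trivial one-dimensional and no proper ideals. Irreducible: not a direct sum of two ideals on which the form is non-degenerate. Derived potential: $S^*V$ (for $V$ with such a form) carries the Poisson bracket with $[x,y]=(x,y)$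 on $V$, $[v,w_1w_2]=[v,w_1]w_2+(-1)^{\bar v\bar w_1}w_1[v,w_2]$, $[v,w]=-(-1)^{\bar v\bar w}[w,v]$; for $\mu\in S^{n+1}V$, $\{a_1,\dots,a_n\}=[a_1,[\dots,[a_n,\mu]\dots]]$ is a commutative invariant $n$-ary superalgebra, and every such structure arises this way ($\mu$ = derived potential). Generalized double extension: given a commutative invariant $n$-ary superalgebra $\mathfrak g$ with derived potential $\mu\in S^{n+1}\mathfrak g$ and a commutative $n$-ary superalgebra $\mathfrak h$ with multiplication $\nu\in S^n\mathfrak h^*\otimes\mathfrak h\cong S^n\mathfrak h^*\cdot\mathfrak h\subset S^*(\mathfrak h\oplus\mathfrak h^* )$, where $\mathfrak h\oplus\mathfrak h^*$ has the form with $\mathfrak h,\mathfrak h^*$ isotropic, $(\alpha,x)=\alpha(x)$, $(x,\alpha)=-(-1)^{\bar\alpha\bar x}\alpha(x)$; on $\mathfrak d=\mathfrak g\oplus\mathfrak h\oplus\mathfrak h^*$ (orthogonal sum of forms) the commutative invariant $n$-ary superalgebra with derived potential $\mu+\nu+\sum_{i=1}^{n+1}\psi_i$, $\psi_i\in S^i\mathfrak h^*\cdot S^{n-i+1}\mathfrak g$, is the generalized double extension of $\mathfrak g$ by $\mathfrak h$ via the $\psi_i$. *)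

(* Defs.v *)
(* Finite-dimensional super vector spaces are modelled in
   coordinates: a super space of dimension (p|q) is  'rV_p * 'rV_q
   (even part, odd part). *)
From HB Require Import structures.
From mathcomp Require Import all_boot all_order all_algebra all_fingroup.
Set Implicit Arguments. Unset Strict Implicit. Unset Printing Implicit Defensive.
Import Order.TTheory GRing.Theory Num.Theory.
Local Open Scope ring_scope.

Section Super.
Variable K : fieldType.

Definition SV (p q : nat) := ('rV[K]_p * 'rV[K]_q)%type.

Definition hom (p q : nat) (b : bool) (x : SV p q) : bool :=
  if b then x.1 == 0 else x.2 == 0.

Definition sgn (b : bool) : K := (-1) ^+ b.

Definition homs (p q k : nat) (pa : 'I_k -> bool) (a : 'I_k -> SV p q) :=
  forall i, hom (pa i) (a i).

Section Space.
Variables p q : nat.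
Local Notation V := (SV p q).

Definition bilinear_form (B : V -> V -> K) :=
  (forall x c y z, B x (c *: y + z) = c * B x y + B x z) /\
  (forall z c x y, B (c *: x + y) z = c * B x z + B y z).

Definition even_form (B : V -> V -> K) :=
  forall x y, hom false x -> hom true y -> B x y = 0 /\ B y x = 0.

Definition superskew (B : V -> V -> K) :=
  forall (ba bb : bool) x y, hom ba x -> hom bb y ->
    B x y = - (sgn (ba && bb) * B y x).

Definition nondegenerate (B : V -> V -> K) :=
  forall x, (forall y, B x y = 0) -> x = 0.

Definition superform (B : V -> V -> K) :=
  [/\ bilinear_form B, even_form B, superskew B & nondegenerate B].

Definition upd (k : nat) (a : 'I_k -> V) (i : 'I_k) (x : V) : 'I_k -> V :=
  fun j => if j == i then x else a j.

Definition multilinear (n : nat) (m : ('I_n -> V) -> V) :=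
  forall a i c x y, m (upd a i (c *: x + y)) = c *: m (upd a i x) + m (upd a i y).

Definition supercommutative (n : nat) (m : ('I_n -> V) -> V) :=
  forall (pa : 'I_n -> bool) (a : 'I_n -> V), homs pa a ->
  forall i j : 'I_n, val j = (val i).+1 ->
    m (a \o (tperm i j : {perm 'I_n})) = sgn (pa i && pa j) *: m a.

Definition tl (n : nat) (b : 'I_n.+1 -> V) : 'I_n -> V := fun i => b (lift ord0 i).

Definition invariant (n : nat) (B : V -> V -> K) (m : ('I_n -> V) -> V) :=
  forall (pb : 'I_n.+1 -> bool) (b : 'I_n.+1 -> V), homs pb b ->
    let i1 : 'I_n.+1 := inord 1 in
    B (b ord0) (m (tl b)) =
    sgn (pb ord0 && pb i1) * B (b i1) (m (tl (b \o (tperm ord0 i1 : {perm 'I_n.+1})))).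

Definition comm_alg (n : nat) (m : ('I_n -> V) -> V) :=
  multilinear m /\ supercommutative m.

Definition comm_inv_alg (n : nat) (B : V -> V -> K) (m : ('I_n -> V) -> V) :=
  [/\ superform B, comm_alg m & invariant B m].

Definition graded (S : {vspace V}) :=
  forall x : V, x \in S -> ((x.1, 0) : V) \in S /\ ((0, x.2) : V) \in S.

Definition subalgebra (n : nat) (m : ('I_n -> V) -> V) (S : {vspace V}) :=
  graded S /\ forall a : 'I_n -> V, (forall i, a i \in S) -> m a \in S.

Definition ideal (n : nat) (m : ('I_n -> V) -> V) (S : {vspace V}) :=
  graded S /\
  forall a : 'I_n -> V, (forall i : 'I_n, val i = n.-1 -> a i \in S) -> m a \in S.

Definition proper_ideal (n : nat) (m : ('I_n -> V) -> V) (S : {vspace V}) :=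
  [/\ ideal m S, S != 0%VS & S != fullv].

Definition maximal_nontrivial_ideal (n : nat) (m : ('I_n -> V) -> V) (S : {vspace V}) :=
  proper_ideal m S /\
  forall T : {vspace V}, ideal m T -> (S <= T)%VS -> T = S \/ T = fullv.

Definition trivial_one_dim (n : nat) (m : ('I_n -> V) -> V) :=
  (p + q)%N = 1%N /\ forall a, m a = 0.

Definition simple_alg (n : nat) (m : ('I_n -> V) -> V) :=
  ~ trivial_one_dim m /\ forall S, ~ proper_ideal m S.

Definition nondeg_on (B : V -> V -> K) (S : {vspace V}) :=
  forall x, x \in S -> (forall y, y \in S -> B x y = 0) -> x = 0.

Definition irreducible_alg (n : nat) (B : V -> V -> K) (m : ('I_n -> V) -> V) :=
  ~ exists S T : {vspace V},
      [/\ ideal m S /\ ideal m T, S != 0%VS /\ T != 0%VS,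
          (S + T)%VS = fullv, (S :&: T)%VS = 0%VS & nondeg_on B S /\ nondeg_on B T].

Definition isotropic (B : V -> V -> K) (S : {vspace V}) :=
  forall x y, x \in S -> y \in S -> B x y = 0.

End Space.

(* ---- the space  d = g (+) h (+) h^*  ---- *)
Section DoubleExt.
Variables pg qg ph qh : nat.
Local Notation G := (SV pg qg).
Local Notation H := (SV ph qh).   (* h, and also h^* via the dual coordinates *)
Local Notation D := (SV (pg + (ph + ph)) (qg + (qh + qh))).

Definition inG (x : G) : D := (row_mx x.1 0, row_mx x.2 0).
Definition inH (x : H) : D := (row_mx 0 (row_mx x.1 0), row_mx 0 (row_mx x.2 0)).
(* an element alpha of h^* given by its coordinates in the dual basis *)
Definition inHs (x : H) : D := (row_mx 0 (row_mx 0 x.1), row_mx 0 (row_mx 0 x.2)).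

Definition prG (u : D) : G := (lsubmx u.1, lsubmx u.2).
Definition prH (u : D) : H := (lsubmx (rsubmx u.1), lsubmx (rsubmx u.2)).
Definition prHs (u : D) : H := (rsubmx (rsubmx u.1), rsubmx (rsubmx u.2)).

Definition dotr (k : nat) (u v : 'rV[K]_k) : K := (u *m v^T) 0 0.

Definition pairing (alpha x : H) : K := dotr alpha.1 x.1 + dotr alpha.2 x.2.

(* orthogonal sum of the form of g and the form on h (+) h^* with h, h^*
   isotropic, (alpha,x) = alpha(x), (x,alpha) = -(-1)^{|alpha||x|} alpha(x) *)
Definition dform (Bg : G -> G -> K) (u v : D) : K :=
  Bg (prG u) (prG v)
  + pairing (prHs u) (prH v)
  + (- dotr (prHs v).1 (prH u).1 + dotr (prHs v).2 (prH u).2).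

(* component tags of an argument: 0 = g, 1 = h, 2 = h^* *)
Definition compD (t : 'I_3) (xg : G) (xh xs : H) : D :=
  if val t == 0%N then inG xg else if val t == 1%N then inH xh else inHs xs.

Definition cnt (k : nat) (t : 'I_k -> 'I_3) (c : nat) : nat :=
  \sum_(j < k) (val (t j) == c : nat).

(* The (n+1)-linear invariant form  (a_0,{a_1,..,a_n})  of d; it is the
   (n+1)-linear form corresponding to the derived potential. *)
Definition potD (n : nat) (Bg : G -> G -> K) (md : ('I_n -> D) -> D) (b : 'I_n.+1 -> D) :=
  dform Bg (b ord0) (md (tl b)).

(* md is the multiplication of a generalized double extension of (g,Bg,mg)
   by (h,nu): its derived potential is  mu + nu + sum_{i=1}^{n+1} psi_i
   with mu the derived potential of g, nu in S^n h^* . h and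
   psi_i in S^i h^* . S^{n-i+1} g.  Componentwise (S^k modelled as
   super-symmetric k-linear forms) this means: *)
Definition gen_double_ext (n : nat) (Bg : G -> G -> K) (mg : ('I_n -> G) -> G)
  (nu : ('I_n -> H) -> H) (md : ('I_n -> D) -> D) :=
  [/\ comm_inv_alg Bg mg /\ comm_alg nu, comm_inv_alg (dform Bg) md,
      (forall x : 'I_n.+1 -> G,
          potD Bg md (inG \o x) = Bg (x ord0) (mg (tl x))),
      (forall (alpha : H) (y : 'I_n -> H),
          dform Bg (inHs alpha) (md (inH \o y)) = pairing alpha (nu y)) &
      (* every argument pattern involving h^* other than (h^*, h, ..., h)
         gets contributions neither from mu nor from nu nor from the psi_i *)
      (forall (t : 'I_n.+1 -> 'I_3) xg xh xs,
          (0 < cnt t 2)%N -> ~ (cnt t 2 = 1%N /\ cnt t 1 = n) ->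
          potD Bg md (fun j => compD (t j) (xg j) (xh j) (xs j)) = 0)].

(* psi_i is the restriction of the potential to patterns with i arguments
   in h and n+1-i in g; a double extension has psi_n = psi_{n+1} = 0 *)
Definition psi_vanish (n : nat) (Bg : G -> G -> K) (md : ('I_n -> D) -> D) (i : nat) :=
  forall (t : 'I_n.+1 -> 'I_3) xg xh xs,
    cnt t 2 = 0%N -> cnt t 1 = i ->
    potD Bg md (fun j => compD (t j) (xg j) (xh j) (xs j)) = 0.

Definition double_ext (n : nat) (Bg : G -> G -> K) (mg : ('I_n -> G) -> G)
  (nu : ('I_n -> H) -> H) (md : ('I_n -> D) -> D) :=
  [/\ gen_double_ext Bg mg nu md, psi_vanish Bg md n & psi_vanish Bg md n.+1].

End DoubleExt.

Definition alg_iso (n p q p' q' : nat)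
  (B : SV p q -> SV p q -> K) (m : ('I_n -> SV p q) -> SV p q)
  (B' : SV p' q' -> SV p' q' -> K) (m' : ('I_n -> SV p' q') -> SV p' q')
  (phi : SV p q -> SV p' q') :=
  [/\ (forall c x y, phi (c *: x + y) = c *: phi x + phi y),
      bijective phi,
      (forall b x, hom b x -> hom b (phi x)),
      (forall a, phi (m a) = m' (phi \o a)) &
      (forall x y, B' (phi x) (phi y) = B x y)].

End Super.

(* Main.v *)
Require Import Defs.
From HB Require Import structures.
From mathcomp Require Import all_boot all_order all_algebra all_fingroup.
From mathcomp Require Import zify.
From mathcomp Require Import ring.
From Stdlib Require Import FunctionalExtensionality.
Set Implicit Arguments. Unset Strict Implicit. Unset Printing Implicit Defensive.
Import Order.TTheory GRing.Theory Num.Theory.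
Local Open Scope ring_scope.
Local Notation hom := Defs.hom.
Local Notation sgn := Defs.sgn.
Local Notation homs := Defs.homs.
Local Notation upd := Defs.upd.
Local Notation multilinear := Defs.multilinear.
Local Notation supercommutative := Defs.supercommutative.
Local Notation tl := Defs.tl.
Local Notation invariant := Defs.invariant.
Local Notation comm_alg := Defs.comm_alg.
Local Notation comm_inv_alg := Defs.comm_inv_alg.
Local Notation graded := Defs.graded.
Local Notation subalgebra := Defs.subalgebra.
Local Notation ideal := Defs.ideal.
Local Notation isotropic := Defs.isotropic.
Local Notation superform := Defs.superform.
Local Notation bilinear_form := Defs.bilinear_form.
Local Notation even_form := Defs.even_form.
Local Notation superskew := Defs.superskew.
Local Notation nondegenerate := Defs.nondegenerate.
Local Notation nondeg_on := Defs.nondeg_on.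
Local Notation dotr := Defs.dotr.
Local Notation pairing := Defs.pairing.
Local Notation dform := Defs.dform.
Local Notation cnt := Defs.cnt.
Local Notation inG := Defs.inG.
Local Notation inH := Defs.inH.
Local Notation inHs := Defs.inHs.
Local Notation prG := Defs.prG.
Local Notation prH := Defs.prH.
Local Notation prHs := Defs.prHs.
Local Notation maximal_nontrivial_ideal := Defs.maximal_nontrivial_ideal.
Local Notation irreducible_alg := Defs.irreducible_alg.
Local Notation simple_alg := Defs.simple_alg.

Lemma lin_lfunE (R : fieldType) (aT rT : vectType R) (f : aT -> rT)
  (hf : forall a u v, f (a *: u + v) = a *: f u + f v) x : linfun f x = f x.
Proof.
pose fL : {linear aT -> rT} := HB.pack f (GRing.isLinear.Build R aT rT _ f hf).
exact: (lfunE fL x).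
Qed.

Lemma B0r (K : fieldType) p q (B : SV K p q -> SV K p q -> K) :
  bilinear_form B -> forall x, B x 0 = 0.
Proof. move=> [hr hl] x; have := hr x 1 0 0; rewrite scale1r addr0 mul1r.
by rewrite -{1}(addr0 (B x 0)) => /addrI <-. Qed.
Lemma B0l (K : fieldType) p q (B : SV K p q -> SV K p q -> K) :
  bilinear_form B -> forall x, B 0 x = 0.
Proof. move=> [hr hl] x; have := hl x 1 0 0; rewrite scale1r addr0 mul1r.
by rewrite -{1}(addr0 (B 0 x)) => /addrI <-. Qed.
Lemma BDr (K : fieldType) p q (B : SV K p q -> SV K p q -> K) :
  bilinear_form B -> forall x y z, B x (y + z) = B x y + B x z.
Proof. by move=> hB x y z; have := hB.1 x 1 y z; rewrite scale1r mul1r. Qed.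
Lemma BDl (K : fieldType) p q (B : SV K p q -> SV K p q -> K) :
  bilinear_form B -> forall x y z, B (x + y) z = B x z + B y z.
Proof. by move=> hB x y z; have := hB.2 z 1 x y; rewrite scale1r mul1r. Qed.
Lemma BZr (K : fieldType) p q (B : SV K p q -> SV K p q -> K) :
  bilinear_form B -> forall x c y, B x (c *: y) = c * B x y.
Proof. by move=> hB x c y; have := hB.1 x c y 0; rewrite addr0 B0r // addr0. Qed.
Lemma BZl (K : fieldType) p q (B : SV K p q -> SV K p q -> K) :
  bilinear_form B -> forall x c y, B (c *: x) y = c * B x y.
Proof. by move=> hB x c y; have := hB.2 y c x 0; rewrite addr0 B0l // addr0. Qed.
Lemma BNl (K : fieldType) p q (B : SV K p q -> SV K p q -> K) :
  bilinear_form B -> forall x y, B (- x) y = - B x y.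
Proof. by move=> hB x y; rewrite -scaleN1r BZl // mulN1r. Qed.
Lemma BNr (K : fieldType) p q (B : SV K p q -> SV K p q -> K) :
  bilinear_form B -> forall x y, B x (- y) = - B x y.
Proof. by move=> hB x y; rewrite -scaleN1r BZr // mulN1r. Qed.
Lemma Bsumr (K : fieldType) p q (B : SV K p q -> SV K p q -> K) (I : finType)
  (P : pred I) (F : I -> SV K p q) :
  bilinear_form B -> forall x, B x (\sum_(i | P i) F i) = \sum_(i | P i) B x (F i).
Proof. move=> hB x; elim/big_rec2: _ => [|i y1 y2 _ <-]; first exact: B0r.
by rewrite BDr. Qed.
Lemma Bsuml (K : fieldType) p q (B : SV K p q -> SV K p q -> K) (I : finType)
  (P : pred I) (F : I -> SV K p q) :
  bilinear_form B -> forall x, B (\sum_(i | P i) F i) x = \sum_(i | P i) B (F i) x.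
Proof. move=> hB x; elim/big_rec2: _ => [|i y1 y2 _ <-]; first exact: B0l.
by rewrite BDl. Qed.

Lemma fstD (K : fieldType) p q (x y : SV K p q) : (x + y).1 = x.1 + y.1. Proof. by []. Qed.
Lemma sndD (K : fieldType) p q (x y : SV K p q) : (x + y).2 = x.2 + y.2. Proof. by []. Qed.
Lemma fstZ (K : fieldType) p q c (x : SV K p q) : (c *: x).1 = c *: x.1. Proof. by []. Qed.
Lemma sndZ (K : fieldType) p q c (x : SV K p q) : (c *: x).2 = c *: x.2. Proof. by []. Qed.
Lemma fst0 (K : fieldType) p q : (0 : SV K p q).1 = 0. Proof. by []. Qed.
Lemma snd0 (K : fieldType) p q : (0 : SV K p q).2 = 0. Proof. by []. Qed.
Lemma fstN (K : fieldType) p q (x : SV K p q) : (- x).1 = - x.1. Proof. by []. Qed.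
Lemma sndN (K : fieldType) p q (x : SV K p q) : (- x).2 = - x.2. Proof. by []. Qed.
Lemma pair_eq (K : fieldType) p q (x y : SV K p q) : x.1 = y.1 -> x.2 = y.2 -> x = y.
Proof. by case: x; case: y => ? ? ? ? /= -> ->. Qed.
Definition prE := (fstD, sndD, fstZ, sndZ, fst0, snd0, fstN, sndN).
Definition pe (K : fieldType) p q (x : SV K p q) : SV K p q := (x.1, 0).
Definition po (K : fieldType) p q (x : SV K p q) : SV K p q := (0, x.2).

Lemma pepo (K : fieldType) p q (x : SV K p q) : x = pe x + po x.
Proof. by apply: pair_eq; rewrite /pe /po !prE /= ?addr0 ?add0r. Qed.
Lemma hom_pe (K : fieldType) p q (x : SV K p q) : hom false (pe x).
Proof. by rewrite /Defs.hom /= eqxx. Qed.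
Lemma hom_po (K : fieldType) p q (x : SV K p q) : hom true (po x).
Proof. by rewrite /Defs.hom /= eqxx. Qed.
Lemma pe_even (K : fieldType) p q (x : SV K p q) : hom false x -> pe x = x.
Proof. by case: x => a b /= /eqP ->. Qed.
Lemma po_odd (K : fieldType) p q (x : SV K p q) : hom true x -> po x = x.
Proof. by case: x => a b /= /eqP ->. Qed.
Lemma po_even (K : fieldType) p q (x : SV K p q) : hom false x -> po x = 0.
Proof. by case: x => a b /= /eqP ->. Qed.
Lemma pe_odd (K : fieldType) p q (x : SV K p q) : hom true x -> pe x = 0.
Proof. by case: x => a b /= /eqP ->. Qed.
Lemma pe_lin (K : fieldType) p q c (x y : SV K p q) : pe (c *: x + y) = c *: pe x + pe y.
Proof. by apply: pair_eq; rewrite /pe !prE /= ?scaler0 ?addr0. Qed.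
Lemma po_lin (K : fieldType) p q c (x y : SV K p q) : po (c *: x + y) = c *: po x + po y.
Proof. by apply: pair_eq; rewrite /po !prE /= ?scaler0 ?addr0. Qed.
Lemma hom_lin (K : fieldType) p q b c (x y : SV K p q) :
  hom b x -> hom b y -> hom b (c *: x + y).
Proof. by case: b; rewrite /Defs.hom !prE => /eqP -> /eqP ->; rewrite scaler0 addr0. Qed.
Lemma hom0 (K : fieldType) p q b : hom b (0 : SV K p q).
Proof. by case: b; rewrite /Defs.hom /= eqxx. Qed.
Lemma hom_sum (K : fieldType) p q b (I : finType) (P : pred I) (F : I -> SV K p q) :
  (forall i, P i -> hom b (F i)) -> hom b (\sum_(i | P i) F i).
Proof. move=> hF; elim/big_rec: _ => [|i x Pi hx]; first exact: hom0.
by rewrite -[F i]scale1r hom_lin // hF. Qed.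
Lemma hom_eo (K : fieldType) p q (x : SV K p q) : hom false x -> hom true x -> x = 0.
Proof. by case: x => a b /= /eqP -> /eqP ->. Qed.

Lemma Beven (K : fieldType) p q (B : SV K p q -> SV K p q -> K) :
  bilinear_form B -> even_form B ->
  forall x y, B x y = B (pe x) (pe y) + B (po x) (po y).
Proof.
move=> hB hE x y; rewrite {1}(pepo x) {1}(pepo y) !BDl // !BDr //.
rewrite (hE _ _ (hom_pe x) (hom_po y)).1 (hE _ _ (hom_pe y) (hom_po x)).2.
by rewrite addr0 add0r.
Qed.
Lemma Beven_e (K : fieldType) p q (B : SV K p q -> SV K p q -> K) :
  bilinear_form B -> even_form B ->
  forall x y, hom false y -> B x y = B (pe x) y.
Proof. by move=> hB hE x y hy; rewrite (Beven hB hE) (po_even hy) (B0r hB) addr0 (pe_even hy). Qed.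
Lemma Beven_o (K : fieldType) p q (B : SV K p q -> SV K p q -> K) :
  bilinear_form B -> even_form B ->
  forall x y, hom true y -> B x y = B (po x) y.
Proof. by move=> hB hE x y hy; rewrite (Beven hB hE) (pe_odd hy) (B0r hB) add0r (po_odd hy). Qed.
Lemma Beven_e' (K : fieldType) p q (B : SV K p q -> SV K p q -> K) :
  bilinear_form B -> even_form B ->
  forall x y, hom false x -> B x y = B x (pe y).
Proof. by move=> hB hE x y hy; rewrite (Beven hB hE) (po_even hy) (B0l hB) addr0 (pe_even hy). Qed.
Lemma Beven_o' (K : fieldType) p q (B : SV K p q -> SV K p q -> K) :
  bilinear_form B -> even_form B ->
  forall x y, hom true x -> B x y = B x (po y).
Proof. by move=> hB hE x y hy; rewrite (Beven hB hE) (pe_odd hy) (B0l hB) add0r (po_odd hy). Qed.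

Lemma graded_pe (K : fieldType) p q (S : {vspace SV K p q}) x :
  graded S -> x \in S -> pe x \in S.
Proof. by move=> hS /hS []. Qed.
Lemma graded_po (K : fieldType) p q (S : {vspace SV K p q}) x :
  graded S -> x \in S -> po x \in S.
Proof. by move=> hS /hS []. Qed.

Lemma orth_flip (K : fieldType) p q (B : SV K p q -> SV K p q -> K) (S : {vspace SV K p q}) x :
  superform B -> graded S -> (forall s, s \in S -> B x s = 0) ->
  forall s, s \in S -> B s x = 0.
Proof.
move=> [hB hE hS _] hg hx s sS.
rewrite (Beven hB hE) (hS false false (pe s) (pe x)) ?hom_pe //.
rewrite (hS true true (po s) (po x)) ?hom_po //.
rewrite -(Beven_e hB hE) ?hom_pe // -(Beven_o hB hE) ?hom_po //.
by rewrite !hx ?graded_pe ?graded_po // !mulr0 oppr0 addr0.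
Qed.


Definition perpv (K : fieldType) p q (B : SV K p q -> SV K p q -> K) (S : {vspace SV K p q}) :
  {vspace SV K p q} :=
  lker (linfun (fun x : SV K p q => \row_(i < \dim S) B x (vbasis S)`_i)).

Lemma perpvP (K : fieldType) p q (B : SV K p q -> SV K p q -> K) (S : {vspace SV K p q}) x :
  bilinear_form B -> reflect (forall s, s \in S -> B x s = 0) (x \in perpv B S).
Proof.
move=> hB; rewrite memv_ker lin_lfunE; last first.
  by move=> a u v; apply/rowP => i; rewrite !mxE BDl // BZl.
apply: (iffP eqP) => [H s sS | H].
  rewrite (coord_vbasis sS) Bsumr //; apply: big1 => i _.
  by rewrite BZr //; move/rowP: H => /(_ i); rewrite !mxE => ->; rewrite mulr0.
apply/rowP => i; rewrite !mxE; apply: H; apply: vbasis_mem; apply: mem_nth.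
by rewrite size_tuple.
Qed.

Lemma dim_perpv (K : fieldType) p q (B : SV K p q -> SV K p q -> K) (S : {vspace SV K p q}) :
  bilinear_form B -> nondegenerate B ->
  \dim (perpv B S) = (\dim (fullv : {vspace SV K p q}) - \dim S)%N.
Proof.
move=> hB hN.
have lb : forall T : {vspace SV K p q},
    (\dim (fullv : {vspace SV K p q}) - \dim T <= \dim (perpv B T))%N.
  move=> T; rewrite /perpv.
  set f := linfun _.
  have := limg_ker_dim f fullv; rewrite capfv => <-.
  have : (\dim (f @: fullv) <= \dim T)%N.
    apply: leq_trans (dimvS (subvf _)) _.
    by rewrite dimvf dim_matrix mul1r.
  by move=> hle; rewrite leq_subLR addnC leq_add2r.
have cap0 : (perpv B S :&: perpv B (S^C)%VS = 0)%VS.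
  apply/eqP; rewrite -subv0; apply/subvP => x /memv_capP [h1 h2].
  rewrite memv0; apply/eqP/hN => y.
  have : y \in (fullv : {vspace SV K p q}) by apply: memvf.
  rewrite -(addv_complf S) => /memv_addP [u uS [v vS ->]].
  by rewrite BDr // (perpvP _ _ hB h1) // (perpvP _ _ hB h2) // addr0.
have := dimv_disjoint_sum cap0.
have := dimvS (subvf (perpv B S + perpv B (S^C)%VS)).
have := lb S; have := lb (S^C)%VS; rewrite dimv_compl.
have := dimvS (subvf S).
set N := \dim fullv. set a := \dim (perpv B S). set b := \dim (perpv B (S^C)%VS). set s := \dim S. set c := \dim (_ + _)%VS. move=> h1 h2 h3 h4 h5; have e : @eq nat c (a + b)%N by exact: h5.
suff : @eq nat a (N - s)%N by []. lia.
Qed.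


Lemma sgnK (K : fieldType) b : sgn K b * sgn K b = 1.
Proof. by case: b; rewrite /Defs.sgn ?expr0 ?expr1 ?mulr1 ?mulrNN ?mulr1. Qed.

Definition Tf (K : fieldType) p q n (B : SV K p q -> SV K p q -> K)
  (m : ('I_n -> SV K p q) -> SV K p q) (b : 'I_n.+1 -> SV K p q) : K :=
  B (b ord0) (m (tl b)).

Definition goodT (K : fieldType) p q n (B : SV K p q -> SV K p q -> K)
  (m : ('I_n -> SV K p q) -> SV K p q) (s : {perm 'I_n.+1}) :=
  forall pb b, homs pb b -> exists c, Tf B m (b \o s) = c * Tf B m b.

Lemma tperm_inj (T T' : finType) (f : T -> T') (x y z : T) : injective f ->
  f (tperm x y z) = tperm (f x) (f y) (f z).
Proof.
move=> fi; case: (tpermP x y z) => [->|->|]; rewrite ?tpermL ?tpermR //.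
by move=> /eqP zx /eqP zy; rewrite tpermD // inj_eq // eq_sym.
Qed.

Lemma goodT_mul (K : fieldType) p q n (B : SV K p q -> SV K p q -> K)
  (m : ('I_n -> SV K p q) -> SV K p q) s t :
  goodT B m s -> goodT B m t -> goodT B m (s * t)%g.
Proof.
move=> gs gt pb b hb.
have e : b \o ((s * t)%g : {perm _}) = (b \o t) \o s.
  by apply: functional_extensionality => x /=; rewrite permM.
have [c1 h1] := gs (pb \o t) (b \o t) (fun i => hb (t i)).
have [c2 h2] := gt pb b hb.
by exists (c1 * c2); rewrite e h1 h2 mulrA.
Qed.

Lemma goodT_adj0 (K : fieldType) p q n (B : SV K p q -> SV K p q -> K)
  (m : ('I_n -> SV K p q) -> SV K p q) (j : 'I_n.+1) :
  invariant B m -> val j = 1%N -> goodT B m (tperm ord0 j).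
Proof.
move=> hI j1 pb b hb.
have ej : j = inord 1 by apply: val_inj; rewrite /= inordK // -j1 ltn_ord.
exists (sgn K (pb ord0 && pb (inord 1))).
rewrite ej /Tf; have := hI pb b hb => /= ->.
by rewrite tpermL mulrA sgnK mul1r.
Qed.

Lemma goodT_adjS (K : fieldType) p q n (B : SV K p q -> SV K p q -> K)
  (m : ('I_n -> SV K p q) -> SV K p q) (i0 j0 : 'I_n) :
  bilinear_form B -> supercommutative m -> val j0 = (val i0).+1 ->
  goodT B m (tperm (lift ord0 i0) (lift ord0 j0)).
Proof.
move=> hB hC ej pb b hb.
have e : tl (b \o (tperm (lift ord0 i0) (lift ord0 j0) : {perm _})) =
         (tl b) \o (tperm i0 j0 : {perm _}).
  apply: functional_extensionality => x; rewrite /tl /=.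
  by rewrite -tperm_inj //; apply: lift_inj.
exists (sgn K (pb (lift ord0 i0) && pb (lift ord0 j0))).
rewrite /Tf e (hC (fun i => pb (lift ord0 i)) (tl b) (fun i => hb _) i0 j0 ej) BZr //=.
by rewrite tpermD // eq_sym neq_lift.
Qed.

Lemma goodT_adj (K : fieldType) p q n (B : SV K p q -> SV K p q -> K)
  (m : ('I_n -> SV K p q) -> SV K p q) (i j : 'I_n.+1) :
  bilinear_form B -> supercommutative m -> invariant B m ->
  val j = (val i).+1 -> goodT B m (tperm i j).
Proof.
move=> hB hC hI ej.
case: (posnP (val i)) => [i0|ipos].
  have -> : i = ord0 by apply: val_inj.
  by apply: goodT_adj0 => //; rewrite ej i0.
have ltj := ltn_ord j.
have jpos : (0 < val j)%N by rewrite ej.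
have hi0 : ((val i).-1 < n)%N by rewrite -ltnS prednK //; apply: ltn_trans (ltn_ord j); rewrite ej.
have hj0 : ((val j).-1 < n)%N by rewrite -ltnS prednK.
have -> : i = lift ord0 (Ordinal hi0) by apply: val_inj => /=; rewrite /bump /= add1n prednK.
have -> : j = lift ord0 (Ordinal hj0) by apply: val_inj => /=; rewrite /bump /= add1n prednK.
by apply: goodT_adjS => //=; rewrite ej /= prednK.
Qed.

Lemma goodT_lt (K : fieldType) p q n (B : SV K p q -> SV K p q -> K)
  (m : ('I_n -> SV K p q) -> SV K p q) :
  bilinear_form B -> supercommutative m -> invariant B m ->
  forall k (i j : 'I_n.+1), val j = k -> (val i < k)%N -> goodT B m (tperm i j).
Proof.
move=> hB hC hI; elim=> [//|k IH] i j jk ik.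
case: (ltnP (val i) k) => [ilt|ige]; last first.
  by apply: goodT_adj => //; rewrite jk; congr S; apply/eqP; rewrite eqn_leq ige -ltnS ik.
have hk : (k < n.+1)%N by apply: ltn_trans (ltn_ord j); rewrite -[nat_of_ord j]/(val j) jk.
pose j' := Ordinal hk.
have e : tperm i j = (tperm j' j * tperm i j' * tperm j' j)%g.
  rewrite -mulgA -{1}(tpermV j' j) -conjgE tpermJ tpermL tpermD //.
    by apply/eqP => e; move: ilt; rewrite -e /= ltnn.
  by apply/eqP => e; move: ik; rewrite -e jk ltnn.
rewrite e; apply: goodT_mul; first apply: goodT_mul.
- by apply: goodT_adj => //; rewrite jk.
- by apply: IH.
- by apply: goodT_adj => //; rewrite jk.
Qed.

Lemma goodT_tperm (K : fieldType) p q n (B : SV K p q -> SV K p q -> K)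
  (m : ('I_n -> SV K p q) -> SV K p q) :
  bilinear_form B -> supercommutative m -> invariant B m ->
  forall i j : 'I_n.+1, goodT B m (tperm i j).
Proof.
move=> hB hC hI i j.
case: (ltngtP (val i) (val j)) => [ij|ji|ij].
- exact: goodT_lt ij.
- by rewrite tpermC; apply: goodT_lt ji.
- have -> : j = i by apply: val_inj.
  rewrite tperm1 => pb b hb; exists 1; rewrite mul1r; congr (Tf _ _ _).
  by apply: functional_extensionality => x /=; rewrite perm1.
Qed.

Lemma Tf_zero_perm (K : fieldType) p q n (B : SV K p q -> SV K p q -> K)
  (m : ('I_n -> SV K p q) -> SV K p q) pb b (i j : 'I_n.+1) :
  bilinear_form B -> supercommutative m -> invariant B m -> homs pb b ->
  Tf B m (b \o (tperm i j : {perm _})) = 0 -> Tf B m b = 0.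
Proof.
move=> hB hC hI hb h.
have g := goodT_tperm hB hC hI i j.
have [c hc] := g (pb \o (tperm i j : {perm _}))
  (b \o (tperm i j : {perm _})) (fun k => hb _).
have e : (b \o (tperm i j : {perm _})) \o (tperm i j : {perm _}) = b.
  by apply: functional_extensionality => x /=; rewrite tpermK.
by rewrite -e hc h mulr0.
Qed.


Lemma upd_id (K : fieldType) p q k (b : 'I_k -> SV K p q) i : upd b i (b i) = b.
Proof. by apply: functional_extensionality => j; rewrite /upd; case: eqP => // ->. Qed.

Lemma hdecomp (K : fieldType) p q k (T : ('I_k -> SV K p q) -> K)
  (S : 'I_k -> {vspace SV K p q}) :
  (forall b i c x y, T (upd b i (c *: x + y)) = c * T (upd b i x) + T (upd b i y)) ->
  (forall i, graded (S i)) ->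
  (forall pb b, homs pb b -> (forall i, b i \in S i) -> T b = 0) ->
  forall b, (forall i, b i \in S i) -> T b = 0.
Proof.
move=> Tlin Sg H.
suff: forall l b, (forall i, b i \in S i) ->
  (forall i : 'I_k, (l <= val i)%N -> hom false (b i) \/ hom true (b i)) -> T b = 0.
  move=> /(_ k) H' b hb; apply: H' => // i; rewrite leqNgt ltn_ord.
  done.
elim=> [|l IH] b hb hh.
  pose pb i := (b i).2 != 0.
  apply: (H pb) => // i; rewrite /pb; case: (hh i (leq0n _)) => hi.
    by have /eqP e := hi; rewrite e eqxx.
  by case: eqP => [e|_] //=; rewrite /Defs.hom e eqxx.
case: (ltnP l k) => [lk|kl]; last first.
  apply: IH => // i li; exfalso; have := leq_trans kl li; by rewrite leqNgt ltn_ord.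
pose i0 := Ordinal lk.
rewrite -(upd_id b i0) (pepo (b i0)) -[pe _]scale1r Tlin mul1r.
have hupd : forall x, x \in S i0 -> hom false x \/ hom true x ->
    T (upd b i0 x) = 0.
  move=> x xS hx; apply: IH.
    by move=> i; rewrite /upd; case: eqP => [->|].
  move=> i li; rewrite /upd; case: eqP => [//|ne].
  apply: hh; have : val i != l by apply/eqP => e; apply: ne; apply: val_inj.
  move: li; rewrite leq_eqVlt => /orP [/eqP ->|//]; by rewrite eqxx.
rewrite !hupd ?addr0 //.
- exact: graded_po.
- by right; exact: hom_po.
- exact: graded_pe.
- by left; exact: hom_pe.
Qed.

Lemma tl_upd0 (K : fieldType) p q n (b : 'I_n.+1 -> SV K p q) x :
  tl (upd b ord0 x) = tl b.
Proof.
apply: functional_extensionality => i; rewrite /tl /upd.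
by case: eqP => // /(f_equal val); rewrite lift0.
Qed.

Lemma tl_updS (K : fieldType) p q n (b : 'I_n.+1 -> SV K p q) i0 x :
  tl (upd b (lift ord0 i0) x) = upd (tl b) i0 x.
Proof.
apply: functional_extensionality => i; rewrite /tl /upd.
by rewrite (inj_eq (@lift_inj _ ord0)).
Qed.

Lemma Tf_lin (K : fieldType) p q n (B : SV K p q -> SV K p q -> K)
  (m : ('I_n -> SV K p q) -> SV K p q) :
  bilinear_form B -> multilinear m ->
  forall b i c x y, Tf B m (upd b i (c *: x + y)) = c * Tf B m (upd b i x) + Tf B m (upd b i y).
Proof.
move=> hB hM b i c x y; rewrite /Tf.
case: (unliftP ord0 i) => [i0 ->|->].
  rewrite !tl_updS hM hB.1 /upd.
  by have -> : (ord0 == lift ord0 i0) = false by apply/negbTE; apply: neq_lift.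
by rewrite !tl_upd0 /upd eqxx hB.2.
Qed.

Lemma Tf_FI (K : fieldType) p q n (B : SV K p q -> SV K p q -> K)
  (m : ('I_n -> SV K p q) -> SV K p q) (I : {vspace SV K p q}) pb b (i j : 'I_n.+1) :
  (0 < n)%N -> superform B -> comm_alg m -> invariant B m -> ideal m I ->
  homs pb b -> i != j -> b i \in perpv B I -> b j \in I -> Tf B m b = 0.
Proof.
move=> hn [hB hE hS hN] [hM hC] hI hId hb ij bi bj.
apply: (Tf_zero_perm (i := ord0) (j := i) hB hC hI hb).
set c1 := b \o _.
pose j1 := tperm ord0 i j.
have j10 : j1 != ord0.
  apply/eqP => e; move: ij; rewrite -(tpermK ord0 i j) -/j1 e tpermL eqxx //.
have c1j : c1 j1 \in I by rewrite /c1 /= /j1 tpermK.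
have c10 : c1 ord0 = b i by rewrite /c1 /= tpermL.
have hc1 : homs (pb \o (tperm ord0 i : {perm _})) c1 by move=> k; apply: hb.
apply: (Tf_zero_perm (i := j1) (j := ord_max) hB hC hI hc1).
set c2 := c1 \o _.
have c20 : c2 ord0 = b i.
  rewrite /c2 /= tpermD ?c10 // eq_sym //.
  by apply/eqP => /(f_equal val) /=; lia.
rewrite /Tf c20; apply: (perpvP _ _ hB bi).
apply: hId.2 => k hk.
rewrite /Defs.tl; have -> : lift ord0 k = ord_max by apply: val_inj; rewrite /= /bump /= hk; lia.
by rewrite /c2 /= tpermR.
Qed.

Lemma Tf_XY (K : fieldType) p q n (B : SV K p q -> SV K p q -> K)
  (m : ('I_n -> SV K p q) -> SV K p q) (X Y : {vspace SV K p q}) pb b (i : 'I_n.+1) :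
  superform B -> comm_alg m -> invariant B m ->
  (forall x a, x \in X -> (forall k, a k \in Y) -> B x (m a) = 0) ->
  homs pb b -> b i \in X -> (forall j, j != i -> b j \in Y) -> Tf B m b = 0.
Proof.
move=> [hB hE hS hN] [hM hC] hI hXY hb bi bj.
apply: (Tf_zero_perm (i := ord0) (j := i) hB hC hI hb).
rewrite /Tf /= tpermL; apply: hXY => // k; rewrite /tl /=; apply: bj.
apply/eqP => e; have : tperm ord0 i (tperm ord0 i (lift ord0 k)) = tperm ord0 i i by rewrite e.
by rewrite tpermK tpermR => /eqP; rewrite eq_sym (negbTE (neq_lift _ _)).
Qed.

Definition Sij (K : fieldType) p q k (i j : 'I_k) (X Y : {vspace SV K p q}) (l : 'I_k) :=
  if l == i then X else if l == j then Y else fullv.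

Lemma graded_full (K : fieldType) p q : graded (fullv : {vspace SV K p q}).
Proof. by move=> x _; rewrite !memvf. Qed.

Lemma Tf_FI_all (K : fieldType) p q n (B : SV K p q -> SV K p q -> K)
  (m : ('I_n -> SV K p q) -> SV K p q) (I : {vspace SV K p q}) b (i j : 'I_n.+1) :
  (0 < n)%N -> superform B -> comm_alg m -> invariant B m -> ideal m I ->
  i != j -> b i \in perpv B I -> b j \in I -> Tf B m b = 0.
Proof.
move=> hn hF hA hI hId ij bi bj; have [hB hE hSk hN] := hF.
have gF : graded (perpv B I).
  move=> x /(perpvP _ _ hB) hx.
  have gI := hId.1.
  split; apply/(perpvP _ _ hB) => s sS.
    by rewrite (Beven_e' hB hE) ?hom_pe // -(Beven_e hB hE) ?hom_pe ?hx ?graded_pe.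
  by rewrite (Beven_o' hB hE) ?hom_po // -(Beven_o hB hE) ?hom_po ?hx ?graded_po.
apply: (hdecomp (S := Sij i j (perpv B I) I)) (b) _.
- exact: (Tf_lin hB hA.1).
- move=> l; rewrite /Sij; case: eqP => _; first exact: gF.
  by case: eqP => _; [exact: hId.1 | exact: graded_full].
- move=> pb b' hb' hS; apply: (Tf_FI hn hF hA hI hId hb' ij).
    by have := hS i; rewrite /Sij eqxx.
  by have := hS j; rewrite /Sij eq_sym (negbTE ij) eqxx.
- by move=> l; rewrite /Sij; case: eqP => [->//|_]; case: eqP => [->//|_]; apply: memvf.
Qed.

Lemma Tf_XY_all (K : fieldType) p q n (B : SV K p q -> SV K p q -> K)
  (m : ('I_n -> SV K p q) -> SV K p q) (X Y : {vspace SV K p q}) b (i : 'I_n.+1) :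
  superform B -> comm_alg m -> invariant B m -> graded X -> graded Y ->
  (forall x a, x \in X -> (forall k, a k \in Y) -> B x (m a) = 0) ->
  b i \in X -> (forall j, j != i -> b j \in Y) -> Tf B m b = 0.
Proof.
move=> hF hA hI gX gY hXY bi bj; have [hB hE hSk hN] := hF.
apply: (hdecomp (S := fun l => if l == i then X else Y)) (b) _.
- exact: (Tf_lin hB hA.1).
- by move=> l; case: eqP.
- move=> pb b' hb' hS; apply: (Tf_XY (i := i) hF hA hI hXY hb').
    by have := hS i; rewrite eqxx.
  by move=> l li; have := hS l; rewrite (negbTE li).
- by move=> l; case: eqP => [->//|/eqP]; apply: bj.
Qed.

Lemma cnt_card k (t : 'I_k -> 'I_3) c : cnt t c = #|[set j | val (t j) == c]|.
Proof.
rewrite /Defs.cnt -sum1_card [RHS]big_mkcond; apply: eq_bigr => j _.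
by rewrite inE; case: (_ == _).
Qed.

Lemma comb1 n (t : 'I_n.+1 -> 'I_3) :
  (0 < cnt t 2)%N -> ~ (cnt t 2 = 1%N /\ cnt t 1 = n) ->
  exists i j, [/\ i != j, val (t i) = 2%N & val (t j) != 1%N].
Proof.
rewrite cnt_card => /card_gt0P [i0]; rewrite inE => /eqP ti0 hn.
case: (boolP [exists j, (j != i0) && (val (t j) != 1%N)]).
  by move=> /existsP [j /andP [ji tj]]; exists i0, j; split; rewrite // eq_sym.
rewrite negb_exists => /forallP hj; exfalso; apply: hn; rewrite !cnt_card.
have tj : forall j, j != i0 -> val (t j) = 1%N.
  by move=> j ji; have := hj j; rewrite ji /= negbK => /eqP.
split.
  have -> : [set j | val (t j) == 2%N] = [set i0].
    apply/setP => j; rewrite !inE.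
    case: (eqVneq j i0) => [->|ji]; first by rewrite ti0.
    by rewrite tj.
  by rewrite cards1.
have -> : [set j | val (t j) == 1%N] = [set~ i0].
  apply/setP => j; rewrite !inE.
  case: (eqVneq j i0) => [->|ji]; first by rewrite ti0.
  by rewrite tj.
by rewrite cardsC1 card_ord.
Qed.

Lemma comb2 n (t : 'I_n.+1 -> 'I_3) :
  (n <= cnt t 1)%N -> exists i, forall j, j != i -> val (t j) = 1%N.
Proof.
rewrite cnt_card => hc.
case: (boolP [exists j, val (t j) != 1%N]); last first.
  by rewrite negb_exists => /forallP hj; exists ord0 => j _; have := hj j; rewrite negbK => /eqP.
move=> /existsP [i0 ti0]; exists i0 => j ji; apply/eqP; apply/negP => tj.
have sub : [set j | val (t j) == 1%N] \subset ~: [set i0; j].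
  apply/subsetP => l; rewrite !inE => /eqP tl1.
  by apply/negP => /orP [] /eqP e; [move: ti0 | move: tj]; rewrite -e tl1.
have := subset_leq_card sub; have := cardsC [set i0; j].
rewrite cards2 eq_sym ji card_ord; lia.
Qed.


Lemma lsubmx0 (K : fieldType) m n1 n2 : lsubmx (0 : 'M[K]_(m, n1 + n2)) = 0.
Proof. by rewrite -row_mx0 row_mxKl. Qed.
Lemma rsubmx0 (K : fieldType) m n1 n2 : rsubmx (0 : 'M[K]_(m, n1 + n2)) = 0.
Proof. by rewrite -row_mx0 row_mxKr. Qed.
Lemma lsubmx_lin (K : fieldType) m n1 n2 c (A B : 'M[K]_(m, n1 + n2)) :
  lsubmx (c *: A + B) = c *: lsubmx A + lsubmx B.
Proof. by apply/matrixP => i j; rewrite !mxE. Qed.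
Lemma rsubmx_lin (K : fieldType) m n1 n2 c (A B : 'M[K]_(m, n1 + n2)) :
  rsubmx (c *: A + B) = c *: rsubmx A + rsubmx B.
Proof. by apply/matrixP => i j; rewrite !mxE. Qed.
Lemma row_mx_lin (K : fieldType) m n1 n2 c (A1 B1 : 'M[K]_(m, n1)) (A2 B2 : 'M[K]_(m, n2)) :
  row_mx (c *: A1 + B1) (c *: A2 + B2) = c *: row_mx A1 A2 + row_mx B1 B2.
Proof. by rewrite scale_row_mx add_row_mx. Qed.

Lemma peq (A B : Type) (x y : A * B) : x.1 = y.1 -> x.2 = y.2 -> x = y.
Proof. by case: x; case: y => ? ? ? ? /= -> ->. Qed.

Lemma prG_inG (K : fieldType) pg qg ph qh (x : SV K pg qg) :
  prG (inG ph qh x) = x.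
Proof. by case: x => a b; rewrite /Defs.prG /Defs.inG /= !row_mxKl. Qed.
Lemma prH_inG (K : fieldType) pg qg ph qh (x : SV K pg qg) :
  prH (inG ph qh x) = 0.
Proof. by rewrite /Defs.prH /Defs.inG /= !row_mxKr !lsubmx0. Qed.
Lemma prHs_inG (K : fieldType) pg qg ph qh (x : SV K pg qg) :
  prHs (inG ph qh x) = 0.
Proof. by rewrite /Defs.prHs /Defs.inG /= !row_mxKr !rsubmx0. Qed.
Lemma prG_inH (K : fieldType) pg qg ph qh (x : SV K ph qh) :
  prG (inH pg qg x) = 0.
Proof. by rewrite /Defs.prG /Defs.inH /= !row_mxKl. Qed.
Lemma prH_inH (K : fieldType) pg qg ph qh (x : SV K ph qh) :
  prH (inH pg qg x) = x.
Proof. by case: x => a b; rewrite /Defs.prH /Defs.inH /= !row_mxKr !row_mxKl. Qed.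
Lemma prHs_inH (K : fieldType) pg qg ph qh (x : SV K ph qh) :
  prHs (inH pg qg x) = 0.
Proof. by rewrite /Defs.prHs /Defs.inH /= !row_mxKr. Qed.
Lemma prG_inHs (K : fieldType) pg qg ph qh (x : SV K ph qh) :
  prG (inHs pg qg x) = 0.
Proof. by rewrite /Defs.prG /Defs.inHs /= !row_mxKl. Qed.
Lemma prH_inHs (K : fieldType) pg qg ph qh (x : SV K ph qh) :
  prH (inHs pg qg x) = 0.
Proof. by rewrite /Defs.prH /Defs.inHs /= !row_mxKr !row_mxKl. Qed.
Lemma prHs_inHs (K : fieldType) pg qg ph qh (x : SV K ph qh) :
  prHs (inHs pg qg x) = x.
Proof. by case: x => a b; rewrite /Defs.prHs /Defs.inHs /= !row_mxKr. Qed.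

Lemma inG_lin (K : fieldType) pg qg ph qh c (x y : SV K pg qg) :
  inG ph qh (c *: x + y) = c *: inG ph qh x + inG ph qh y.
Proof. by apply: peq; rewrite /Defs.inG !prE /= -row_mx_lin scaler0 addr0. Qed.
Lemma inH_lin (K : fieldType) pg qg ph qh c (x y : SV K ph qh) :
  inH pg qg (c *: x + y) = c *: inH pg qg x + inH pg qg y.
Proof. by apply: peq; rewrite /Defs.inH !prE /= -!row_mx_lin !scaler0 !addr0. Qed.
Lemma prG_lin (K : fieldType) pg qg ph qh c (x y : SV K (pg + (ph + ph)) (qg + (qh + qh))) :
  prG (c *: x + y) = c *: prG x + prG y.
Proof. by apply: peq; rewrite /Defs.prG !prE /= lsubmx_lin. Qed.
Lemma prH_lin (K : fieldType) pg qg ph qh c (x y : SV K (pg + (ph + ph)) (qg + (qh + qh))) :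
  prH (c *: x + y) = c *: prH x + prH y.
Proof. by apply: peq; rewrite /Defs.prH !prE /= !rsubmx_lin !lsubmx_lin. Qed.
Lemma prHs_lin (K : fieldType) pg qg ph qh c (x y : SV K (pg + (ph + ph)) (qg + (qh + qh))) :
  prHs (c *: x + y) = c *: prHs x + prHs y.
Proof. by apply: peq; rewrite /Defs.prHs !prE /= !rsubmx_lin. Qed.

Lemma inG_hom (K : fieldType) pg qg ph qh b (x : SV K pg qg) :
  hom b x -> hom b (inG ph qh x).
Proof. by case: b; rewrite /Defs.hom /Defs.inG /= => /eqP ->; rewrite row_mx0. Qed.
Lemma inH_hom (K : fieldType) pg qg ph qh b (x : SV K ph qh) :
  hom b x -> hom b (inH pg qg x).
Proof. by case: b; rewrite /Defs.hom /Defs.inH /= => /eqP ->; rewrite !row_mx0. Qed.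
Lemma prG_hom (K : fieldType) pg qg ph qh b (x : SV K (pg + (ph + ph)) (qg + (qh + qh))) :
  hom b x -> hom b (prG x).
Proof. by case: b; rewrite /Defs.hom /Defs.prG /= => /eqP ->; rewrite lsubmx0. Qed.
Lemma prH_hom (K : fieldType) pg qg ph qh b (x : SV K (pg + (ph + ph)) (qg + (qh + qh))) :
  hom b x -> hom b (prH x).
Proof. by case: b; rewrite /Defs.hom /Defs.prH /= => /eqP ->; rewrite rsubmx0 lsubmx0. Qed.

Lemma dotr0l (K : fieldType) k (v : 'rV[K]_k) : dotr 0 v = 0.
Proof. by rewrite /Defs.dotr mul0mx mxE. Qed.
Lemma dotr0r (K : fieldType) k (v : 'rV[K]_k) : dotr v 0 = 0.
Proof. by rewrite /Defs.dotr trmx0 mulmx0 mxE. Qed.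
Lemma dotrE (K : fieldType) k (u v : 'rV[K]_k) : dotr u v = \sum_i u 0 i * v 0 i.
Proof. by rewrite /Defs.dotr mxE; apply: eq_bigr => i _; rewrite mxE. Qed.

Lemma dform_inG (K : fieldType) pg qg ph qh (Bg : SV K pg qg -> SV K pg qg -> K) (x : SV K pg qg)
  (v : SV K (pg + (ph + ph)) (qg + (qh + qh))) :
  dform Bg (inG ph qh x) v = Bg x (prG v).
Proof.
by rewrite /Defs.dform prG_inG prHs_inG prH_inG /Defs.pairing /= !dotr0l !dotr0r oppr0 !addr0.
Qed.
Lemma dform_inHs (K : fieldType) pg qg ph qh (Bg : SV K pg qg -> SV K pg qg -> K) (x : SV K ph qh)
  (v : SV K (pg + (ph + ph)) (qg + (qh + qh))) :
  dform Bg (inHs pg qg x) v = Bg 0 (prG v) + pairing x (prH v).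
Proof.
by rewrite /Defs.dform prG_inHs prHs_inHs prH_inHs /= !dotr0r oppr0 !addr0.
Qed.

Lemma transport (K : fieldType) p q p' q' n (B : SV K p q -> SV K p q -> K)
  (m : ('I_n -> SV K p q) -> SV K p q) (B' : SV K p' q' -> SV K p' q' -> K)
  (phi : SV K p' q' -> SV K p q) (psi : SV K p q -> SV K p' q') :
  (forall c x y, phi (c *: x + y) = c *: phi x + phi y) ->
  cancel phi psi -> cancel psi phi ->
  (forall b x, hom b x -> hom b (phi x)) ->
  (forall x y, B' x y = B (phi x) (phi y)) ->
  comm_inv_alg B m -> comm_inv_alg B' (fun a => psi (m (phi \o a))).
Proof.
move=> hl c1 c2 hp hB' [[hB hE hS hN] [hM hC] hI].
have phi0 : phi 0 = 0.
  have := hl 1 0 0; rewrite !scale1r addr0 => h.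
  by have := congr1 (fun v => v - phi 0) h; rewrite /= subrr addrK => ->.
have psil : forall c x y, psi (c *: x + y) = c *: psi x + psi y.
  by move=> c x y; apply: (can_inj c1); rewrite hl !c2.
have psi0 : psi 0 = 0 by rewrite -phi0 c1.
have psiZ : forall c x, psi (c *: x) = c *: psi x.
  by move=> c x; rewrite -[c *: x]addr0 psil psi0 addr0.
have phiupd : forall (a : 'I_n -> SV K p' q') i z, phi \o upd a i z = upd (phi \o a) i (phi z).
  by move=> a i z; apply: functional_extensionality => j; rewrite /= /Defs.upd; case: eqP.
split; [split|split|].
- split=> [x c y z|z c x y]; rewrite !hB' hl; [exact: hB.1 | exact: hB.2].
- by move=> x y hx hy; rewrite !hB'; apply: hE; apply: hp.
- by move=> ba bb x y hx hy; rewrite !hB'; apply: hS; apply: hp.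
- move=> x hx; rewrite -[x]c1; have -> : phi x = 0; last by rewrite psi0.
  by apply: hN => v; rewrite -[v]c2 -hB' hx.
- by move=> a i c x y /=; rewrite !phiupd hl hM psil.
- by move=> pa a ha i j e /=; rewrite (hC pa (phi \o a) (fun k => hp _ _ (ha k)) i j e) psiZ.
- move=> pb b hb /=; rewrite !hB' !c2.
  exact: (hI pb (phi \o b) (fun k => hp _ _ (hb k))).
Qed.

Lemma comm_alg_restrict (K : fieldType) p q p' q' n
  (md : ('I_n -> SV K p q) -> SV K p q) (iota : SV K p' q' -> SV K p q)
  (pi : SV K p q -> SV K p' q') :
  (forall c x y, iota (c *: x + y) = c *: iota x + iota y) ->
  (forall c x y, pi (c *: x + y) = c *: pi x + pi y) ->
  (forall b x, hom b x -> hom b (iota x)) ->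
  comm_alg md -> comm_alg (fun a => pi (md (iota \o a))).
Proof.
move=> hi hp hh [hM hC].
have pi0 : pi 0 = 0.
  have := hp 1 0 0; rewrite !scale1r addr0 => h.
  by have := congr1 (fun v => v - pi 0) h; rewrite /= subrr addrK => ->.
have piZ : forall c x, pi (c *: x) = c *: pi x.
  by move=> c x; rewrite -[c *: x]addr0 hp pi0 addr0.
have iupd : forall (a : 'I_n -> SV K p' q') i z, iota \o upd a i z = upd (iota \o a) i (iota z).
  by move=> a i z; apply: functional_extensionality => j; rewrite /= /Defs.upd; case: eqP.
split.
- by move=> a i c x y /=; rewrite !iupd hi hM hp.
- by move=> pa a ha i j e /=; rewrite (hC pa (iota \o a) (fun k => hh _ _ (ha k)) i j e) piZ.
Qed.

Lemma restrictG (K : fieldType) pg qg ph qh n (Bg : SV K pg qg -> SV K pg qg -> K)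
  (md : ('I_n -> SV K (pg + (ph + ph)) (qg + (qh + qh))) -> SV K (pg + (ph + ph)) (qg + (qh + qh))) :
  comm_inv_alg (dform Bg) md ->
  comm_inv_alg Bg (fun a => prG (md (inG ph qh \o a))).
Proof.
move=> [[hB hE hS hN] hA hI].
have eB : forall x y, Bg x y = dform Bg (inG ph qh x) (inG ph qh y).
  by move=> x y; rewrite dform_inG prG_inG.
split; [split| |].
- split=> [x c y z|z c x y]; rewrite !eB inG_lin; [exact: hB.1 | exact: hB.2].
- by move=> x y hx hy; rewrite !eB; apply: hE; apply: inG_hom.
- by move=> ba bb x y hx hy; rewrite !eB; apply: hS; apply: inG_hom.
- move=> x hx; rewrite -(prG_inG ph qh x).
  have -> : inG ph qh x = 0; last by apply: peq; apply: lsubmx0.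
  by apply: hN => v; rewrite dform_inG hx.
- apply: comm_alg_restrict => //.
  + exact: inG_lin.
  + exact: prG_lin.
  + exact: inG_hom.
- move=> pb b hb /=; rewrite -!dform_inG.
  exact: (hI pb (inG ph qh \o b) (fun k => inG_hom _ _ (hb k))).
Qed.


Definition lc (K : fieldType) p q k (c : 'rV[K]_k) (w : 'I_k -> SV K p q) : SV K p q :=
  \sum_i c 0 i *: w i.
Definition lc2 (K : fieldType) p q k1 k2 (x : SV K k1 k2) (we : 'I_k1 -> SV K p q)
  (wo : 'I_k2 -> SV K p q) : SV K p q := lc x.1 we + lc x.2 wo.

Lemma lc_lin (K : fieldType) p q k a (c d : 'rV[K]_k) (w : 'I_k -> SV K p q) :
  lc (a *: c + d) w = a *: lc c w + lc d w.
Proof.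
rewrite /lc scaler_sumr -big_split /=; apply: eq_bigr => i _.
by rewrite !mxE scalerDl scalerA.
Qed.
Lemma lc0 (K : fieldType) p q k (w : 'I_k -> SV K p q) : lc 0 w = 0.
Proof. by rewrite /lc; apply: big1 => i _; rewrite mxE scale0r. Qed.
Lemma lc_mem (K : fieldType) p q k (c : 'rV[K]_k) (w : 'I_k -> SV K p q) (S : {vspace SV K p q}) :
  (forall i, w i \in S) -> lc c w \in S.
Proof. by move=> hw; rewrite /lc; apply: memv_suml => i _; apply: memvZ. Qed.
Lemma lc_hom (K : fieldType) p q k b (c : 'rV[K]_k) (w : 'I_k -> SV K p q) :
  (forall i, hom b (w i)) -> hom b (lc c w).
Proof. move=> hw; apply: hom_sum => i _; rewrite -[_ *: _]addr0; apply: hom_lin => //; exact: hom0. Qed.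
Lemma B_lc_l (K : fieldType) p q (B : SV K p q -> SV K p q -> K) k (c : 'rV[K]_k) w y :
  bilinear_form B -> B (lc c w) y = \sum_i c 0 i * B (w i) y.
Proof. by move=> hB; rewrite /lc Bsuml //; apply: eq_bigr => i _; rewrite BZl. Qed.
Lemma B_lc_r (K : fieldType) p q (B : SV K p q -> SV K p q -> K) k (c : 'rV[K]_k) w y :
  bilinear_form B -> B y (lc c w) = \sum_i c 0 i * B y (w i).
Proof. by move=> hB; rewrite /lc Bsumr //; apply: eq_bigr => i _; rewrite BZr. Qed.
Lemma sum_delta (K : fieldType) k (c : 'rV[K]_k) (j : 'I_k) :
  \sum_i c 0 i * (i == j)%:R = c 0 j.
Proof.
rewrite (bigD1 j) //= eqxx mulr1 big1 ?addr0 // => i /negbTE ->; by rewrite mulr0.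
Qed.
Lemma B_lc_delta (K : fieldType) p q (B : SV K p q -> SV K p q -> K) k (c d : 'rV[K]_k)
  (w z : 'I_k -> SV K p q) e :
  bilinear_form B -> (forall i j, B (w i) (z j) = e * (i == j)%:R) ->
  B (lc c w) (lc d z) = e * dotr c d.
Proof.
move=> hB hwz; rewrite B_lc_l // dotrE mulr_sumr; apply: eq_bigr => i _.
rewrite B_lc_r //.
under eq_bigr => j _ do rewrite hwz mulrCA.
by rewrite -mulr_sumr (eq_bigr (fun j => d 0 j * (j == i)%:R)) ?sum_delta;
  [ring | move=> j _; rewrite eq_sym].
Qed.
Lemma B_lc_zero (K : fieldType) p q (B : SV K p q -> SV K p q -> K) k1 k2 (c : 'rV[K]_k1)
  (d : 'rV[K]_k2) (w : 'I_k1 -> SV K p q) (z : 'I_k2 -> SV K p q) :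
  bilinear_form B -> (forall i j, B (w i) (z j) = 0) -> B (lc c w) (lc d z) = 0.
Proof.
move=> hB hwz; rewrite B_lc_l //; apply: big1 => i _; rewrite B_lc_r // big1 ?mulr0 //.
by move=> j _; rewrite hwz mulr0.
Qed.
Lemma B_lc_delta1 (K : fieldType) p q (B : SV K p q -> SV K p q -> K) k (c : 'rV[K]_k)
  (w : 'I_k -> SV K p q) y (j : 'I_k) e :
  bilinear_form B -> (forall i, B (w i) y = e * (i == j)%:R) -> B (lc c w) y = e * c 0 j.
Proof.
move=> hB hw; rewrite B_lc_l //.
under eq_bigr => i _ do rewrite hw mulrCA.
by rewrite -mulr_sumr sum_delta.
Qed.
Lemma B_lc_zero1 (K : fieldType) p q (B : SV K p q -> SV K p q -> K) k (c : 'rV[K]_k)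
  (w : 'I_k -> SV K p q) y :
  bilinear_form B -> (forall i, B (w i) y = 0) -> B (lc c w) y = 0.
Proof. by move=> hB hw; rewrite B_lc_l //; apply: big1 => i _; rewrite hw mulr0. Qed.

Lemma lc2_lin (K : fieldType) p q k1 k2 a (x y : SV K k1 k2) we (wo : 'I_k2 -> SV K p q) :
  lc2 (a *: x + y) we wo = a *: lc2 x we wo + lc2 y we wo.
Proof. rewrite /lc2 !prE !lc_lin scalerDr; rewrite -!addrA; congr (_ + _); rewrite addrCA //. Qed.
Lemma lc2_0 (K : fieldType) p q k1 k2 we (wo : 'I_k2 -> SV K p q) :
  lc2 (0 : SV K k1 k2) we wo = 0.
Proof. by rewrite /lc2 !prE !lc0 addr0. Qed.
Lemma lc2_mem (K : fieldType) p q k1 k2 (x : SV K k1 k2) we (wo : 'I_k2 -> SV K p q) (S : {vspace SV K p q}) :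
  (forall i, we i \in S) -> (forall i, wo i \in S) -> lc2 x we wo \in S.
Proof. by move=> he ho; rewrite /lc2; apply: memvD; apply: lc_mem. Qed.
Lemma lc2_hom (K : fieldType) p q k1 k2 b (x : SV K k1 k2) we (wo : 'I_k2 -> SV K p q) :
  (forall i, hom false (we i)) -> (forall i, hom true (wo i)) -> hom b x -> hom b (lc2 x we wo).
Proof.
move=> he ho; case: b; rewrite {1}/Defs.hom => /eqP hx; rewrite /lc2 hx lc0 ?addr0 ?add0r;
  exact: lc_hom.
Qed.

Lemma graded_add (K : fieldType) p q (S T : {vspace SV K p q}) :
  graded S -> graded T -> graded (S + T)%VS.
Proof.
move=> gS gT x /memv_addP [u uS [v vT ->]].
have e1 : ((u + v).1, 0) = pe u + pe v by apply: peq; rewrite /pe !prE ?addr0.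
have e2 : (0, (u + v).2) = po u + po v by apply: peq; rewrite /po !prE ?addr0.
rewrite e1 e2; split; apply: memv_add; by [apply: graded_pe | apply: graded_po].
Qed.

Lemma perpv_graded (K : fieldType) p q (B : SV K p q -> SV K p q -> K) (S : {vspace SV K p q}) :
  bilinear_form B -> even_form B -> graded S -> graded (perpv B S).
Proof.
move=> hB hE gS x /(perpvP _ _ hB) hx.
split; apply/(perpvP _ _ hB) => s sS.
  by rewrite (Beven_e' hB hE) ?hom_pe // -(Beven_e hB hE) ?hom_pe ?hx ?graded_pe.
by rewrite (Beven_o' hB hE) ?hom_po // -(Beven_o hB hE) ?hom_po ?hx ?graded_po.
Qed.

Lemma orth_flip2 (K : fieldType) p q (B : SV K p q -> SV K p q -> K) (S : {vspace SV K p q}) x :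
  superform B -> graded S -> (forall s, s \in S -> B s x = 0) ->
  forall s, s \in S -> B x s = 0.
Proof.
move=> [hB hE hS _] hg hx s sS.
rewrite (Beven hB hE) (hS false false (pe x) (pe s)) ?hom_pe //.
rewrite (hS true true (po x) (po s)) ?hom_po //.
rewrite -(Beven_e' hB hE) ?hom_pe // -(Beven_o' hB hE) ?hom_po //.
by rewrite !hx ?graded_pe ?graded_po // !mulr0 oppr0 addr0.
Qed.

Lemma prHs_hom (K : fieldType) pg qg ph qh b (x : SV K (pg + (ph + ph)) (qg + (qh + qh))) :
  hom b x -> hom b (prHs x).
Proof. by case: b; rewrite /Defs.hom /Defs.prHs /= => /eqP ->; rewrite !rsubmx0. Qed.

Definition cons0 (K : fieldType) p q n (s : SV K p q) (a : 'I_n -> SV K p q) : 'I_n.+1 -> SV K p q :=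
  fun k => if unlift ord0 k is Some k' then a k' else s.
Lemma tl_cons0 (K : fieldType) p q n (s : SV K p q) (a : 'I_n -> SV K p q) : tl (cons0 s a) = a.
Proof. by apply: functional_extensionality => i; rewrite /Defs.tl /cons0 liftK. Qed.
Lemma cons0_0 (K : fieldType) p q n (s : SV K p q) (a : 'I_n -> SV K p q) : cons0 s a ord0 = s.
Proof. by rewrite /cons0 unlift_none. Qed.

Lemma B_lc2_r (K : fieldType) p q (B : SV K p q -> SV K p q -> K) k1 k2 (x : SV K k1 k2) we wo y :
  bilinear_form B -> (forall j, B y (we j) = 0) -> (forall j, B y (wo j) = 0) ->
  B y (lc2 x we wo) = 0.
Proof.
move=> hB he ho; rewrite /lc2 BDr // !B_lc_r // !big1 ?addr0 // => j _.
  by rewrite ho mulr0.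
by rewrite he mulr0.
Qed.
Lemma B_lc2_l (K : fieldType) p q (B : SV K p q -> SV K p q -> K) k1 k2 (x : SV K k1 k2) we wo y :
  bilinear_form B -> (forall j, B (we j) y = 0) -> (forall j, B (wo j) y = 0) ->
  B (lc2 x we wo) y = 0.
Proof.
move=> hB he ho; rewrite /lc2 BDl // !B_lc_l // !big1 ?addr0 // => j _.
  by rewrite ho mulr0.
by rewrite he mulr0.
Qed.

Lemma graded_basis (K : fieldType) p q (S : {vspace SV K p q}) :
  graded S ->
  exists k1 k2 (we : 'I_k1 -> SV K p q) (wo : 'I_k2 -> SV K p q),
  [/\ forall i, we i \in S /\ hom false (we i),
      forall i, wo i \in S /\ hom true (wo i),
      forall y, y \in S -> exists x : SV K k1 k2, lc2 x we wo = y,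
      forall x : SV K k1 k2, lc2 x we wo = 0 -> x = 0 &
      (k1 + k2)%N = \dim S].
Proof.
move=> gS.
pose SE := (linfun (@pe K p q) @: S)%VS.
pose SO := (linfun (@po K p q) @: S)%VS.
have peE : forall x, linfun (@pe K p q) x = pe x by move=> x; apply: lin_lfunE; exact: pe_lin.
have poE : forall x, linfun (@po K p q) x = po x by move=> x; apply: lin_lfunE; exact: po_lin.
have SEm : forall x, x \in SE -> x \in S /\ hom false x.
  move=> x /memv_imgP [u uS ->]; rewrite peE; split; [exact: graded_pe | exact: hom_pe].
have SOm : forall x, x \in SO -> x \in S /\ hom true x.
  move=> x /memv_imgP [u uS ->]; rewrite poE; split; [exact: graded_po | exact: hom_po].
exists (\dim SE), (\dim SO), (fun i => (vbasis SE)`_i), (fun i => (vbasis SO)`_i).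
have memE : forall i : 'I_(\dim SE), (vbasis SE)`_i \in SE.
  by move=> i; apply: vbasis_mem; apply: mem_nth; rewrite size_tuple.
have memO : forall i : 'I_(\dim SO), (vbasis SO)`_i \in SO.
  by move=> i; apply: vbasis_mem; apply: mem_nth; rewrite size_tuple.
split.
- by move=> i; apply: SEm.
- by move=> i; apply: SOm.
- move=> y yS.
  exists (\row_i coord (vbasis SE) i (pe y), \row_i coord (vbasis SO) i (po y)).
  rewrite /lc2 /lc /= [y in RHS]pepo; congr (_ + _).
    rewrite [in RHS](coord_vbasis (_ : pe y \in SE)); first by apply: eq_bigr => i _; rewrite mxE.
    by rewrite -peE; apply: memv_img.
  rewrite [in RHS](coord_vbasis (_ : po y \in SO)); first by apply: eq_bigr => i _; rewrite mxE.
  by rewrite -poE; apply: memv_img.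
- move=> x hx.
  have hE : hom false (lc x.1 (fun i => (vbasis SE)`_i)) by apply: lc_hom => i; case: (SEm _ (memE i)).
  have hO : hom true (lc x.2 (fun i => (vbasis SO)`_i)) by apply: lc_hom => i; case: (SOm _ (memO i)).
  have e1 : lc x.1 (fun i => (vbasis SE)`_i) = - lc x.2 (fun i => (vbasis SO)`_i).
    by apply/eqP; rewrite -subr_eq0 opprK; apply/eqP; exact: hx.
  have z1 : lc x.1 (fun i => (vbasis SE)`_i) = 0.
    apply: hom_eo => //; rewrite e1 -scaleN1r -[_ *: _]addr0; apply: hom_lin => //; exact: hom0.
  have z2 : lc x.2 (fun i => (vbasis SO)`_i) = 0 by move: hx; rewrite /lc2 z1 add0r.
  case: x {hx hE hO e1} z1 z2 => a b /= z1 z2.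
  have fE := basis_free (vbasisP SE); have fO := basis_free (vbasisP SO).
  congr (_, _); apply/rowP => i; rewrite mxE.
    by move/freeP: fE => /(_ (fun i => a 0 i) z1 i).
  by move/freeP: fO => /(_ (fun i => b 0 i) z2 i).
- have cap0 : (SE :&: SO = 0)%VS.
    apply/eqP; rewrite -subv0; apply/subvP => x /memv_capP [/SEm [_ h1] /SOm [_ h2]].
    by rewrite memv0 (hom_eo h1 h2).
  rewrite -dimv_disjoint_sum //; congr (\dim _); apply/eqP; rewrite eqEsubv; apply/andP; split.
    by apply/subvP => x /memv_addP [u /SEm [uS _] [v /SOm [vS _] ->]]; apply: memvD.
  apply/subvP => y yS; rewrite (pepo y); apply: memv_add.
    by rewrite -peE; apply: memv_img.
  by rewrite -poE; apply: memv_img.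
Qed.

Lemma dual_vec (K : fieldType) p q (B : SV K p q -> SV K p q -> K) (F : {vspace SV K p q})
  ph qh (he : 'I_ph -> SV K p q) (ho : 'I_qh -> SV K p q) :
  superform B -> graded F ->
  (forall i, hom false (he i)) -> (forall i, hom true (ho i)) ->
  (ph + qh)%N = \dim F ->
  (forall x, x \in F -> (forall j, B x (he j) = 0) -> (forall j, B x (ho j) = 0) -> x = 0) ->
  exists (fe : 'I_ph -> SV K p q) (fo : 'I_qh -> SV K p q),
  [/\ forall i, fe i \in F /\ hom false (fe i),
      forall i, fo i \in F /\ hom true (fo i),
      forall i, (forall j, B (fe i) (he j) = (i == j)%:R) /\ (forall j, B (fe i) (ho j) = 0),
      forall i, (forall j, B (fo i) (ho j) = (i == j)%:R) /\ (forall j, B (fo i) (he j) = 0) &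
      forall f, f \in F -> exists x : SV K ph qh, lc2 x fe fo = f].
Proof.
move=> hF gF hhe hho dimF Finj; have [hB hE hS hN] := hF.
pose hw (j : 'I_(ph + qh)%N) := match split j with inl k => he k | inr k => ho k end.
have hwl : forall k, hw (lshift qh k) = he k by move=> k; rewrite /hw (unsplitK (inl k)).
have hwr : forall k, hw (rshift ph k) = ho k by move=> k; rewrite /hw (unsplitK (inr k)).
pose Phi (x : SV K p q) := \row_(j < (ph + qh)%N) B x (hw j).
have PhiE : forall x, linfun Phi x = Phi x.
  by move=> x; apply: lin_lfunE => a u v; apply/rowP => j; rewrite !mxE BDl // BZl.
have ker0 : (F :&: lker (linfun Phi) = 0)%VS.
  apply/eqP; rewrite -subv0; apply/subvP => x /memv_capP [xF]; rewrite memv_ker PhiE => /eqP hx.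
  rewrite memv0; apply/eqP; apply: Finj => // j.
    by move/rowP: hx => /(_ (lshift qh j)); rewrite !mxE hwl.
  by move/rowP: hx => /(_ (rshift ph j)); rewrite !mxE hwr.
have img : (linfun Phi @: F)%VS = fullv.
  apply/eqP; rewrite eqEdim subvf /=.
  have := limg_ker_dim (linfun Phi) F; rewrite ker0 dimv0 add0n => ->.
  by rewrite dimvf dim_matrix mul1r dimF.
have surj : forall r, exists f, (f \in F) && (Phi f == r).
  move=> r; have : r \in (linfun Phi @: F)%VS by rewrite img memvf.
  by move=> /memv_imgP [f fF ->]; exists f; rewrite fF PhiE eqxx.
pose fsel r := xchoose (surj r).
have fselF : forall r, fsel r \in F by move=> r; have /andP [] := xchooseP (surj r).
have fselP : forall r j, B (fsel r) (hw j) = r 0 j.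
  by move=> r j; have /andP [_ /eqP e] := xchooseP (surj r); rewrite -[in RHS]e mxE.
pose fe (i : 'I_ph) := pe (fsel (\row_j (j == lshift qh i)%:R)).
pose fo (i : 'I_qh) := po (fsel (\row_j (j == rshift ph i)%:R)).
have feP : forall i, (forall j, B (fe i) (he j) = (i == j)%:R) /\ (forall j, B (fe i) (ho j) = 0).
  move=> i; split=> j; last by apply: (hE _ _ (hom_pe _) (hho j)).1.
  by rewrite /fe -(Beven_e hB hE) // -hwl fselP mxE eq_lshift eq_sym.
have foP : forall i, (forall j, B (fo i) (ho j) = (i == j)%:R) /\ (forall j, B (fo i) (he j) = 0).
  move=> i; split=> j; last by apply: (hE _ _ (hhe j) (hom_po _)).2.
  by rewrite /fo -(Beven_o hB hE) // -hwr fselP mxE eq_rshift eq_sym.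
exists fe, fo; split => //.
- by move=> i; split; [apply: graded_pe | apply: hom_pe].
- by move=> i; split; [apply: graded_po | apply: hom_po].
move=> f fF.
exists (\row_j B f (he j), \row_j B f (ho j)).
have hmem : lc2 (\row_j B f (he j), \row_j B f (ho j)) fe fo \in F.
  apply: lc2_mem => i; by [apply: graded_pe | apply: graded_po].
apply/eqP; rewrite -subr_eq0; apply/eqP; apply: Finj.
- by apply: memvB.
- move=> j; rewrite BDl // BNl // /lc2 BDl // (@B_lc_delta1 K p q B ph _ fe _ j 1) //.
    rewrite B_lc_zero1 // ?mxE ?mul1r ?addr0 ?subrr // => i; exact: (foP i).2.
  by move=> i; rewrite (feP i).1 mul1r.
- move=> j; rewrite BDl // BNl // /lc2 BDl // (@B_lc_delta1 K p q B qh _ fo _ j 1) //.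
    rewrite B_lc_zero1 // ?mxE ?mul1r ?add0r ?subrr // => i; exact: (feP i).2.
  by move=> i; rewrite (foP i).1 mul1r.
Qed.


Lemma ideal_add (K : fieldType) p q n (m : ('I_n -> SV K p q) -> SV K p q) (S T : {vspace SV K p q}) :
  multilinear m -> ideal m S -> ideal m T -> ideal m (S + T)%VS.
Proof.
move=> hM [gS hS] [gT hT]; split; first exact: graded_add.
move=> a ha.
case: (boolP [exists i : 'I_n, val i == n.-1]); last first.
  rewrite negb_exists => /forallP hn.
  have hSa := hS a (fun i e => False_ind _ (negP (hn i) (introT eqP e))).
  by rewrite -[m a]addr0; apply: memv_add => //; apply: mem0v.
move=> /existsP [l /eqP hl].
have /memv_addP [u uS [v vT e]] := ha l hl.
rewrite -(upd_id a l) e -[u]scale1r hM scale1r.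
apply: memv_add; [apply: hS | apply: hT] => i hi; rewrite /Defs.upd;
  (have -> : i = l by apply: val_inj; rewrite hi hl); by rewrite eqxx.
Qed.

Lemma F_facts (K : fieldType) n p q (hn : (0 < n)%N)
  (B : SV K p q -> SV K p q -> K) (m : ('I_n -> SV K p q) -> SV K p q)
  (I : {vspace SV K p q}) :
  comm_inv_alg B m -> irreducible_alg B m -> maximal_nontrivial_ideal m I ->
  [/\ ideal m (perpv B I), (perpv B I <= I)%VS & perpv B (perpv B I) = I].
Proof.
move=> hA hIrr [[hIdI hI0 hIfull] hImax].
have [hF hAl hI] := hA; have [hB hE hS hN] := hF; have [hM hC] := hAl.
have gI := hIdI.1.
set F := perpv B I.
have gF : graded F by apply: perpv_graded.
have FI : forall f x, f \in F -> x \in I -> B f x = 0 /\ B x f = 0.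
  move=> f x fF xI; split; first exact: (perpvP _ _ hB fF).
  by apply: (orth_flip hF gI _ xI) => s sI; apply: (perpvP _ _ hB fF).
have idF : ideal m F.
  split => // a ha; apply/(perpvP _ _ hB) => s sI.
  apply: (orth_flip2 hF gI _ sI) => t tI.
  have : Tf B m (cons0 t a) = 0.
    apply: (Tf_FI_all (i := ord_max) (j := ord0) hn hF hAl hI hIdI).
    - by apply/eqP => /(f_equal val) /=; lia.
    - rewrite /cons0; case: unliftP => [k' e|e]; last by move: e => /(f_equal val) /=; lia.
      by apply: ha; move: e => /(f_equal (@nat_of_ord _)); rewrite lift0 /= => e; apply/eqP; rewrite -eqSS -e prednK.
    - by rewrite cons0_0.
  by rewrite /Tf tl_cons0 cons0_0.
have dimF : \dim F = (\dim (fullv : {vspace SV K p q}) - \dim I)%N by apply: dim_perpv.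
have FsubI : (F <= I)%VS.
  have idJ : ideal m (I + F)%VS by apply: ideal_add.
  case: (hImax (I + F)%VS idJ (addvSl I F)) => [e|e].
    by rewrite -[X in (_ <= X)%VS]e addvSr.
  exfalso; apply: hIrr; exists I, F.
  have cap0 : (I :&: F = 0)%VS.
    apply/eqP; rewrite -subv0; apply/subvP => x /memv_capP [xI xF].
    rewrite memv0; apply/eqP/hN => y.
    have : y \in (I + F)%VS by rewrite e memvf.
    move=> /memv_addP [u uI [v vF ->]].
    by rewrite BDr // (FI _ _ xF uI).1 (FI _ _ vF xI).2 addr0.
  split.
  - by split.
  - split => //; apply/eqP => F0.
    have : \dim F = 0%N by rewrite F0 dimv0.
    rewrite dimF => /eqP; rewrite subn_eq0 => hle.
    move: hIfull; rewrite -(eqP (_ : I == fullv)) ?eqxx //.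
    by rewrite eqEdim subvf hle.
  - exact: e.
  - exact: cap0.
  split.
  - move=> x xI hx; apply: hN => y.
    have : y \in (I + F)%VS by rewrite e memvf.
    move=> /memv_addP [u uI [v vF ->]].
    by rewrite BDr // hx // (FI _ _ vF xI).2 addr0.
  - move=> x xF hx; apply: hN => y.
    have : y \in (I + F)%VS by rewrite e memvf.
    move=> /memv_addP [u uI [v vF ->]].
    by rewrite BDr // (FI _ _ xF uI).1 hx // add0r.
split => //.
apply/eqP; rewrite eq_sym eqEdim; apply/andP; split.
  apply/subvP => x xI; apply/(perpvP _ _ hB) => f fF.
  exact: (FI _ _ fF xI).2.
rewrite dim_perpv // dimF subnBA ?dimvS ?subvf //.
by rewrite addnC addnK.
Qed.


Definition mkD (K : fieldType) pg qg ph qh (x : SV K pg qg) (b a : SV K ph qh) :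
  SV K (pg + (ph + ph)) (qg + (qh + qh)) :=
  (row_mx x.1 (row_mx b.1 a.1), row_mx x.2 (row_mx b.2 a.2)).

Lemma prG_mkD (K : fieldType) pg qg ph qh (x : SV K pg qg) (b a : SV K ph qh) :
  prG (mkD x b a) = x.
Proof. by case: x => ? ?; rewrite /mkD /Defs.prG /= !row_mxKl. Qed.
Lemma prH_mkD (K : fieldType) pg qg ph qh (x : SV K pg qg) (b a : SV K ph qh) :
  prH (mkD x b a) = b.
Proof. by case: b => ? ?; rewrite /mkD /Defs.prH /= !row_mxKr !row_mxKl. Qed.
Lemma prHs_mkD (K : fieldType) pg qg ph qh (x : SV K pg qg) (b a : SV K ph qh) :
  prHs (mkD x b a) = a.
Proof. by case: a => ? ?; rewrite /mkD /Defs.prHs /= !row_mxKr. Qed.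
Lemma pr_eq0 (K : fieldType) pg qg ph qh (u : SV K (pg + (ph + ph)) (qg + (qh + qh))) :
  prG u = 0 -> prH u = 0 -> prHs u = 0 -> u = 0.
Proof.
case: u => u1 u2; rewrite /Defs.prG /Defs.prH /Defs.prHs /= => e1 e2 e3.
case: e1 => e11 e12; case: e2 => e21 e22; case: e3 => e31 e32.
apply: peq => /=.
  by rewrite -(hsubmxK u1) -(hsubmxK (rsubmx u1)) e11 e21 e31 !row_mx0.
by rewrite -(hsubmxK u2) -(hsubmxK (rsubmx u2)) e12 e22 e32 !row_mx0.
Qed.

Lemma hom_add (K : fieldType) p q b (x y : SV K p q) : hom b x -> hom b y -> hom b (x + y).
Proof. by move=> hx hy; rewrite -[x]scale1r; apply: hom_lin. Qed.

Lemma add3ACA (V : zmodType) (a1 b1 a2 b2 a3 b3 : V) :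
  (a1 + b1) + (a2 + b2) + (a3 + b3) = (a1 + a2 + a3) + (b1 + b2 + b3).
Proof. by rewrite (addrACA a1) (addrACA (a1 + a2)). Qed.

Lemma dotrC (K : fieldType) k (u v : 'rV[K]_k) : dotr u v = dotr v u.
Proof. by rewrite !dotrE; apply: eq_bigr => i _; rewrite mulrC. Qed.

Theorem corollary1 (K : numFieldType) (n p q : nat) (hn : (0 < n)%N)
  (B : SV K p q -> SV K p q -> K) (m : ('I_n -> SV K p q) -> SV K p q)
  (I h : {vspace SV K p q}) :
  comm_inv_alg B m ->
  irreducible_alg B m ->
  ~ simple_alg m ->
  maximal_nontrivial_ideal m I ->
  subalgebra m h -> isotropic B h ->
  (I + h)%VS = fullv -> (I :&: h)%VS = 0%VS ->
  exists (pg qg ph qh : nat)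
         (Bg : SV K pg qg -> SV K pg qg -> K)
         (mg : ('I_n -> SV K pg qg) -> SV K pg qg)
         (nu : ('I_n -> SV K ph qh) -> SV K ph qh)
         (md : ('I_n -> SV K (pg + (ph + ph)) (qg + (qh + qh))) ->
                SV K (pg + (ph + ph)) (qg + (qh + qh)))
         (phi : SV K (pg + (ph + ph)) (qg + (qh + qh)) -> SV K p q),
    [/\ double_ext Bg mg nu md,
        alg_iso (dform Bg) md B m phi,
        (forall x, phi (inH pg qg x) \in h) &
        (forall y, y \in h -> exists x, phi (inH pg qg x) = y)].
Proof.
move=> hA hIrr _ hMax hSub hIso hIh hIh0.
have [hF hAl hI] := hA; have [hB hE hS hN] := hF; have [hM hC] := hAl.
have [hIdI hI0 hIfull] := hMax.1.
have [idF FsubI perpF] := F_facts hn hA hIrr hMax.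
set F := perpv B I in idF FsubI perpF.
have gI := hIdI.1; have gF := idF.1; have gh := hSub.1.
have FIo : forall f x, f \in F -> x \in I -> B f x = 0 /\ B x f = 0.
  move=> f x fF xI; split; first exact: (perpvP _ _ hB fF).
  by apply: (orth_flip hF gI _ xI) => s sI; apply: (perpvP _ _ hB fF).
have dimF : \dim F = (\dim (fullv : {vspace SV K p q}) - \dim I)%N by apply: dim_perpv.
have dimIh : (\dim I + \dim h)%N = \dim (fullv : {vspace SV K p q}).
  by rewrite -dimv_disjoint_sum // hIh.
have [ph [qh [he [ho [heP hoP hspan hfree hdim]]]]] := graded_basis gh.
have Finj : forall x, x \in F -> (forall j, B x (he j) = 0) -> (forall j, B x (ho j) = 0) -> x = 0.
  move=> x xF h1 h2; apply: hN => y.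
  have : y \in (I + h)%VS by rewrite hIh memvf.
  move=> /memv_addP [u uI [w wh ->]]; rewrite BDr // (FIo _ _ xF uI).1 add0r.
  have [z <-] := hspan w wh; exact: B_lc2_r.
have dimFh : (ph + qh)%N = \dim F by rewrite hdim dimF -dimIh addKn.
have [fe [fo [feP foP fePB foPB Fspan]]] :=
  dual_vec hF gF (fun i => (heP i).2) (fun i => (hoP i).2) dimFh Finj.
pose Gs := perpv B (F + h)%VS.
have gFh : graded (F + h)%VS by apply: graded_add.
have gGs : graded Gs by apply: perpv_graded.
have [pg [qg [ge [go [geP goP gspan gfree gdim]]]]] := graded_basis gGs.
have GsI : forall x, x \in Gs -> x \in I.
  move=> x /(perpvP _ _ hB) hx; rewrite -perpF; apply/(perpvP _ _ hB) => f fF.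
  by apply: hx; apply: (subvP (addvSl F h)).
have Gorth : forall g y, g \in Gs -> y \in (F + h)%VS -> B g y = 0 /\ B y g = 0.
  move=> g y gG yFh; split; first exact: (perpvP _ _ hB gG).
  by apply: (orth_flip hF gFh _ yFh) => s sS; apply: (perpvP _ _ hB gG).
have inFh1 : forall f, f \in F -> f \in (F + h)%VS by move=> f; apply: (subvP (addvSl F h)).
have inFh2 : forall w, w \in h -> w \in (F + h)%VS by move=> w; apply: (subvP (addvSr F h)).
pose phG (x : SV K pg qg) := lc2 x ge go.
pose phH (x : SV K ph qh) := lc2 x he ho.
pose phF (x : SV K ph qh) := lc2 x fe fo.
pose phi (u : SV K (pg + (ph + ph)) (qg + (qh + qh))) :=
  phG (prG u) + phH (prH u) + phF (prHs u).
have phGm : forall x, phG x \in Gs by move=> x; apply: lc2_mem => i; [case: (geP i) | case: (goP i)].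
have phHm : forall x, phH x \in h by move=> x; apply: lc2_mem => i; [case: (heP i) | case: (hoP i)].
have phFm : forall x, phF x \in F by move=> x; apply: lc2_mem => i; [case: (feP i) | case: (foP i)].
have phi_lin : forall c x y, phi (c *: x + y) = c *: phi x + phi y.
  move=> c x y; rewrite /phi prG_lin prH_lin prHs_lin /phG /phH /phF !lc2_lin.
  by rewrite add3ACA !scalerDr.
have phi_hom : forall b x, hom b x -> hom b (phi x).
  move=> b x hx.
  have h1 : hom b (phG (prG x)).
    by apply: lc2_hom; [move=> i; case: (geP i) | move=> i; case: (goP i) | exact: prG_hom].
  have h2 : hom b (phH (prH x)).
    by apply: lc2_hom; [move=> i; case: (heP i) | move=> i; case: (hoP i) | exact: prH_hom].
  have h3 : hom b (phF (prHs x)).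
    by apply: lc2_hom; [move=> i; case: (feP i) | move=> i; case: (foP i) | exact: prHs_hom].
  by rewrite /phi; apply: hom_add; first apply: hom_add.
have phi_inG : forall x, phi (inG ph qh x) = phG x.
  by move=> x; rewrite /phi prG_inG prH_inG prHs_inG /phH /phF !lc2_0 !addr0.
have phi_inH : forall x, phi (inH pg qg x) = phH x.
  by move=> x; rewrite /phi prG_inH prH_inH prHs_inH /phG /phF !lc2_0 addr0 add0r.
have phi_inHs : forall x, phi (inHs pg qg x) = phF x.
  by move=> x; rewrite /phi prG_inHs prH_inHs prHs_inHs /phG /phH !lc2_0 !add0r.
have m1 : forall x : K, x = 1 * x by move=> x; rewrite mul1r.
have BFhe : forall a j, B (phF a) (he j) = a.1 0 j.
  move=> a j; rewrite /phF /lc2 BDl // (B_lc_delta1 _ hB (fun i => etrans ((fePB i).1 j) (m1 _))).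
  by rewrite (B_lc_zero1 _ hB (fun i => (foPB i).2 j)) mul1r addr0.
have BFho : forall a j, B (phF a) (ho j) = a.2 0 j.
  move=> a j; rewrite /phF /lc2 BDl // (B_lc_delta1 _ hB (fun i => etrans ((foPB i).1 j) (m1 _))).
  by rewrite (B_lc_zero1 _ hB (fun i => (fePB i).2 j)) mul1r add0r.
have he_fe : forall i j, B (he i) (fe j) = -1 * (i == j)%:R.
  move=> i j; rewrite (hS false false) ?(heP i).2 ?(feP j).2 // (fePB j).1 /Defs.sgn /=.
  by rewrite expr0 mul1r mulN1r eq_sym.
have ho_fo : forall i j, B (ho i) (fo j) = 1 * (i == j)%:R.
  move=> i j; rewrite (hS true true) ?(hoP i).2 ?(foP j).2 // (foPB j).1 /Defs.sgn /=.
  by rewrite expr1 mulN1r opprK mul1r eq_sym.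
have he_fo : forall i j, B (he i) (fo j) = 0 by move=> i j; exact: (hE _ _ (heP i).2 (foP j).2).1.
have ho_fe : forall i j, B (ho i) (fe j) = 0 by move=> i j; exact: (hE _ _ (feP j).2 (hoP i).2).2.
have BHfe : forall b j, B (phH b) (fe j) = - b.1 0 j.
  move=> b j; rewrite /phH /lc2 BDl // (B_lc_delta1 _ hB (fun i => he_fe i j)).
  by rewrite (B_lc_zero1 _ hB (fun i => ho_fe i j)) mulN1r addr0.
have BHfo : forall b j, B (phH b) (fo j) = b.2 0 j.
  move=> b j; rewrite /phH /lc2 BDl // (B_lc_delta1 _ hB (fun i => ho_fo i j)).
  by rewrite (B_lc_zero1 _ hB (fun i => he_fo i j)) mul1r add0r.
have BFH : forall a b, B (phF a) (phH b) = pairing a b.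
  move=> a b; rewrite /phF /phH /lc2 BDl // !BDr //.
  rewrite (B_lc_delta _ _ hB (fun i j => etrans ((fePB i).1 j) (m1 _))).
  rewrite (B_lc_delta _ _ hB (fun i j => etrans ((foPB i).1 j) (m1 _))).
  rewrite (B_lc_zero _ _ hB (fun i j => (fePB i).2 j)) (B_lc_zero _ _ hB (fun i j => (foPB i).2 j)).
  by rewrite /Defs.pairing !mul1r addr0 add0r.
have BHF : forall a b, B (phH b) (phF a) = - dotr a.1 b.1 + dotr a.2 b.2.
  move=> a b; rewrite /phF /phH /lc2 BDl // !BDr //.
  rewrite (B_lc_delta _ _ hB he_fe) (B_lc_delta _ _ hB ho_fo).
  rewrite (B_lc_zero _ _ hB he_fo) (B_lc_zero _ _ hB ho_fe).
  by rewrite mulN1r mul1r addr0 add0r !(dotrC b.1) !(dotrC b.2).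
pose Bg (x y : SV K pg qg) := B (phG x) (phG y).
have iso : forall u v, B (phi u) (phi v) = dform Bg u v.
  have exp9 : forall a1 a2 a3 b1 b2 b3, B (a1 + a2 + a3) (b1 + b2 + b3) =
      B a1 b1 + B a1 b2 + B a1 b3 + (B a2 b1 + B a2 b2 + B a2 b3) +
      (B a3 b1 + B a3 b2 + B a3 b3).
    by move=> a1 a2 a3 b1 b2 b3; rewrite !BDl // !BDr.
  move=> u v; rewrite /phi exp9.
  rewrite (Gorth _ _ (phGm _) (inFh2 _ (phHm _))).1 (Gorth _ _ (phGm _) (inFh1 _ (phFm _))).1.
  rewrite (Gorth _ _ (phGm _) (inFh2 _ (phHm _))).2 (Gorth _ _ (phGm _) (inFh1 _ (phFm _))).2.
  rewrite (hIso _ _ (phHm _) (phHm _)) (FIo _ _ (phFm _) (subvP FsubI _ (phFm _))).1 BFH BHF.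
  by rewrite /Defs.dform /Bg; ring.
have B0 : forall y, B 0 y = 0 by move=> y; apply: B0l.
have exp3l : forall a1 a2 a3 y, B (a1 + a2 + a3) y = B a1 y + B a2 y + B a3 y.
  by move=> a1 a2 a3 y; rewrite !BDl.
have Gh : forall x y, y \in h -> B (phG x) y = 0 by move=> x y yh; exact: (Gorth _ _ (phGm x) (inFh2 _ yh)).1.
have GF : forall x y, y \in F -> B (phG x) y = 0 by move=> x y yF; exact: (Gorth _ _ (phGm x) (inFh1 _ yF)).1.
have Bphi_he : forall u j, B (phi u) (he j) = (prHs u).1 0 j.
  move=> u j; rewrite /phi exp3l Gh ?(heP j).1 // (hIso _ _ (phHm _) (heP j).1).
  by rewrite BFhe !add0r.
have Bphi_ho : forall u j, B (phi u) (ho j) = (prHs u).2 0 j.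
  move=> u j; rewrite /phi exp3l Gh ?(hoP j).1 // (hIso _ _ (phHm _) (hoP j).1).
  by rewrite BFho !add0r.
have Bphi_fe : forall u j, B (phi u) (fe j) = - (prH u).1 0 j.
  move=> u j; rewrite /phi exp3l GF ?(feP j).1 // BHfe.
  by rewrite (FIo _ _ (phFm _) (subvP FsubI _ (feP j).1)).1 addr0 add0r.
have Bphi_fo : forall u j, B (phi u) (fo j) = (prH u).2 0 j.
  move=> u j; rewrite /phi exp3l GF ?(foP j).1 // BHfo.
  by rewrite (FIo _ _ (phFm _) (subvP FsubI _ (foP j).1)).1 addr0 add0r.
have phi0 : forall u, phi u = 0 -> u = 0.
  move=> u hu.
  have eHs : prHs u = 0.
    apply: peq; rewrite ?fst0 ?snd0; apply/rowP => j; rewrite [RHS]mxE.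
      by rewrite -Bphi_he hu B0.
    by rewrite -Bphi_ho hu B0.
  have eH : prH u = 0.
    apply: peq; rewrite ?fst0 ?snd0; apply/rowP => j; rewrite [RHS]mxE.
      by apply/eqP; rewrite -oppr_eq0 -Bphi_fe hu B0.
    by rewrite -Bphi_fo hu B0.
  apply: pr_eq0 => //; apply: gfree.
  by move: hu; rewrite /phi eH eHs /phH /phF !lc2_0 !addr0.
have phi_inj : injective phi.
  move=> x y e; apply/eqP; rewrite -subr_eq0; apply/eqP; apply: phi0.
  rewrite addrC -scaleN1r phi_lin e scaleN1r addNr //.
have surj : forall v, exists u, phi u == v.
  move=> v.
  pose a : SV K ph qh := (\row_j B v (he j), \row_j B v (ho j)).
  pose v1 := v - phF a.
  pose b : SV K ph qh := (\row_j (- B v1 (fe j)), \row_j B v1 (fo j)).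
  pose v2 := v1 - phH b.
  have v1he : forall j, B v1 (he j) = 0.
    by move=> j; rewrite /v1 BDl // BNl // BFhe mxE subrr.
  have v1ho : forall j, B v1 (ho j) = 0.
    by move=> j; rewrite /v1 BDl // BNl // BFho mxE subrr.
  have v2G : v2 \in Gs.
    apply/(perpvP _ _ hB) => s /memv_addP [f fF [w wh ->]].
    rewrite BDr //; have [z <-] := Fspan f fF; have [z' <-] := hspan w wh.
    rewrite B_lc2_r // ?B_lc2_r ?addr0 // => j.
    - by rewrite /v2 BDl // BNl // (hIso _ _ (phHm _) (heP j).1) oppr0 addr0.
    - by rewrite /v2 BDl // BNl // (hIso _ _ (phHm _) (hoP j).1) oppr0 addr0.
    - by rewrite /v2 BDl // BNl // BHfe mxE opprK addrN.
    - by rewrite /v2 BDl // BNl // BHfo mxE subrr.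
  have [x ex] := gspan v2 v2G.
  exists (mkD x b a); apply/eqP.
  by rewrite /phi prG_mkD prH_mkD prHs_mkD /phG ex /v2 /v1 !subrK.
pose psi v := xchoose (surj v).
have phipsi : cancel psi phi by move=> v; apply/eqP; exact: (xchooseP (surj v)).
have psiphi : cancel phi psi by move=> u; apply: phi_inj; rewrite phipsi.
pose md a := psi (m (phi \o a)).
have hmd : comm_inv_alg (dform Bg) md.
  by apply: (transport phi_lin psiphi phipsi phi_hom) => // x y; rewrite iso.
pose mg a := prG (md (inG ph qh \o a)).
pose nu a := prH (md (@Defs.inH K pg qg ph qh \o a)).
have [hFd hAd hId] := hmd.
have Bg0 : forall y, Bg 0 y = 0 by move=> y; rewrite /Bg /phG lc2_0 B0.
have potT : forall b, potD Bg md b = Tf B m (phi \o b).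
  by move=> b; rewrite /Defs.potD -iso /md phipsi.
have t3 : forall t : 'I_3, [\/ val t = 0%N, val t = 1%N | val t = 2%N].
  move=> [[|[|[|k]]] hk] /=; [by constructor 1 | by constructor 2 | by constructor 3 | by []].
have psi_van : forall k, (n <= k)%N -> psi_vanish Bg md k.
  move=> k hk t xg xh xs h0 h1.
  have hc : (n <= cnt t 1)%N by rewrite h1.
  have [i hi] := comb2 hc.
  have ti2 : val (t i) != 2%N.
    apply/negP => /eqP e; move: h0; rewrite cnt_card => /eqP; rewrite cards_eq0 => /eqP e0.
    have : i \in [set j | val (t j) == 2%N] by rewrite inE e.
    by rewrite e0 inE.
  rewrite potT; apply: (Tf_XY_all (X := (Gs + h)%VS) (Y := h) (i := i) hF hAl hI (graded_add gGs gh) gh).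
  - move=> x a /memv_addP [g gG [w wh ->]] ha.
    have mah : m a \in h := hSub.2 a ha.
    by rewrite BDl // (Gorth _ _ gG (inFh2 _ mah)).1 (hIso _ _ wh mah) addr0.
  - rewrite /= /Defs.compD; case: (t3 (t i)) => e; rewrite e /=.
    + by rewrite phi_inG; apply: (subvP (addvSl Gs h)).
    + by rewrite phi_inH; apply: (subvP (addvSr Gs h)).
    + by move: ti2; rewrite e.
  - by move=> j ji; rewrite /= /Defs.compD hi //= phi_inH.
have van : forall (t : 'I_n.+1 -> 'I_3) xg xh xs,
    (0 < cnt t 2)%N -> ~ (cnt t 2 = 1%N /\ cnt t 1 = n) ->
    potD Bg md (fun j => compD (t j) (xg j) (xh j) (xs j)) = 0.
  move=> t xg xh xs h0 h1; have [i [j [ij ti tj]]] := comb1 h0 h1.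
  rewrite potT; apply: (Tf_FI_all (i := i) (j := j) hn hF hAl hI hIdI ij).
  - by rewrite /= /Defs.compD ti /= phi_inHs.
  - rewrite /= /Defs.compD; case: (t3 (t j)) => e; rewrite e //=.
    + by rewrite phi_inG; apply: GsI.
    + by move: tj; rewrite e.
    + by rewrite phi_inHs; apply: (subvP FsubI).
exists pg, qg, ph, qh, Bg, mg, nu, md, phi; split.
- split; [split | exact: psi_van (leqnn n) | exact: psi_van (leqnSn n)].
  + split; first exact: restrictG hmd.
    apply: comm_alg_restrict hAd.
    * exact: inH_lin.
    * exact: prH_lin.
    * exact: inH_hom.
  + exact: hmd.
  + by move=> x; rewrite /Defs.potD /= dform_inG.
  + by move=> al y; rewrite dform_inHs Bg0 add0r.
  + exact: van.
- split.
  + exact: phi_lin.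
  + by exists psi.
  + exact: phi_hom.
  + by move=> a; rewrite /md phipsi.
  + by move=> x y; rewrite iso.
- by move=> x; rewrite phi_inH.
- by move=> y yh; have [x ex] := hspan y yh; exists x; rewrite phi_inH.
Qed.
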